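(* Let $\zeta \in \mathbb{C}^*$. The group $G_q(\zeta)$ is finite if and only if $\zeta$ is a primitive $n$-th root of unity for some $n \in \{2,3,4,5\}$.
   Context: Let $q$ be a formal parameter and let $R_q=\begin{pmatrix} q & 1\\ 0 & 1\end{pmatrix}$, $S_q=\begin{pmatrix} 0 & -q^{-1}\\ 1 & 0\end{pmatrix}\in \mathrm{GL}(2,\mathbb{Z}[q,q^{-1}])$. Let $G_q=\langle R_q,S_q\rangle\subset \mathrm{GL}(2,\mathbb{Z}[q,q^{-1}])$ be the group they generate. For $\zeta\in\mathbb{C}^*$, set $G_q(\zeta)=\{M_q|_{q=\zeta} : M_q\in G_q\}\subset \mathrm{GL}(2,\mathbb{C})$ (the group obtained by substituting $q=\zeta$ in all entries). *)

(* Defs.v *)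
From HB Require Import structures.
From mathcomp Require Import all_boot all_order all_algebra.
From mathcomp Require Import complex.
From mathcomp Require Import Rstruct.
Set Implicit Arguments. Unset Strict Implicit. Unset Printing Implicit Defensive.
Import Order.TTheory GRing.Theory Num.Theory.
Local Open Scope ring_scope.

Definition C : Type := complex Rdefinitions.R.
#[global] Hint Unfold C : core.

Definition Rmat (z : C) : 'M[C]_2 :=
  \matrix_(i < 2, j < 2)
    if (i == 0 :> nat) then (if (j == 0 :> nat) then z else 1) else
    (if (j == 0 :> nat) then 0 else 1).

Definition Smat (z : C) : 'M[C]_2 :=
  \matrix_(i < 2, j < 2)
    if (i == 0 :> nat) then (if (j == 0 :> nat) then 0 else - z^-1) else
    (if (j == 0 :> nat) then 1 else 0).

Definition letter_mx (z : C) (g : bool * bool) : 'M[C]_2 :=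
  let A := if g.1 then Rmat z else Smat z in
  if g.2 then invmx A else A.

Definition word_mx (z : C) (w : seq (bool * bool)) : 'M[C]_2 :=
  foldr (fun g M => letter_mx z g *m M) 1%:M w.

(* G_q(z): the specializations at q = z of the elements of
   G_q = <R_q, S_q>; every element of G_q is a word in R_q^{+-1}, S_q^{+-1},
   and specialization is multiplicative, so this is the set of word values. *)
Definition Gz (z : C) : 'M[C]_2 -> Prop := fun M => exists w, M = word_mx z w.

Definition finite_mxset (P : 'M[C]_2 -> Prop) : Prop :=
  exists s : seq 'M[C]_2, forall M, P M -> M \in s.

(* Main.v *)
Require Import Defs.
From HB Require Import structures.
From mathcomp Require Import all_boot all_order all_algebra.
From mathcomp Require Import complex Rstruct.
Import GRing.Theory Num.Theory.
Local Open Scope ring_scope.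
From Stdlib Require Reals Lra Psatz.

Module Trig.
Import Reals Lra Psatz.
Import GRing.Theory Num.Theory.

Section S.
Local Open Scope R_scope.

Lemma cos_lt1 {x} : 0 < x -> x < 2 * PI -> cos x < 1.
Proof.
move=> h1 h2.
have e : x = (2 * (x / 2)) by lra.
rewrite e cos_2a_sin.
have : 0 < sin (x / 2) by apply: sin_gt_0; lra.
nra.
Qed.

Definition theta (m : nat) : R := 2 * PI * / INR m.

Lemma theta_bound {m k : nat} : leq 1 k -> leq (S k) m ->
  0 < INR k * theta m /\ INR k * theta m < 2 * PI.
Proof.
move=> k0 km.
have hk : 0 < INR k by apply: lt_0_INR; apply/ltP.
have hkm : INR k < INR m by apply: lt_INR; apply/ltP.
have hm : 0 < INR m by lra.
have hi : 0 < / INR m by apply: Rinv_0_lt_compat.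
have e : INR m * / INR m = 1 by apply: Rinv_r; lra.
have hpi := PI_RGT_0; rewrite /theta.
have h1 : INR k * / INR m < 1 by rewrite -e; apply: Rmult_lt_compat_r.
have e2 : INR k * (2 * PI * / INR m) = 2 * PI * (INR k * / INR m) by ring.
rewrite e2; split.
  apply: Rmult_lt_0_compat; first lra.
  by apply: Rmult_lt_0_compat.
have : 2 * PI * (INR k * / INR m) < 2 * PI * 1.
  by apply: Rmult_lt_compat_l; lra.
lra.
Qed.

Lemma cos_half (m : nat) : leq 6 m -> 1 / 2 <= cos (theta m).
Proof.
move=> m6.
have hm : 6 <= INR m.
  have := le_INR 6 m (elimT leP m6); rewrite /INR; lra.
have hpi := PI_RGT_0.
have hi : 0 < / INR m by apply: Rinv_0_lt_compat; lra.
have e : INR m * / INR m = 1 by apply: Rinv_r; lra.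
have t0 : 0 <= theta m by rewrite /theta; nra.
have t3 : theta m <= PI / 3.
  rewrite /theta.
  have : / INR m <= / 6 by apply: Rinv_le_contravar; lra.
  nra.
rewrite -cos_PI3.
case: (Rle_lt_or_eq_dec _ _ t3) => [lt|->]; last by lra.
apply: Rlt_le; apply: cos_decreasing_1; lra.
Qed.

Lemma cs2 m : cos (theta m) * cos (theta m) + sin (theta m) * sin (theta m) = 1.
Proof. have := sin2_cos2 (theta m); rewrite /Rsqr; lra. Qed.

Definition sig (m : nat) : R := 1 + 2 * cos (theta m).

Lemma sig_ge2 m : leq 6 m -> 2 <= sig m.
Proof. move=> /cos_half; rewrite /sig; lra. Qed.

Lemma sig_re m : sig m * cos (theta m) - 0 * sin (theta m) =
  cos (theta m) * cos (theta m) - sin (theta m) * sin (theta m) + cos (theta m) + 1.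
Proof. have := cs2 m; rewrite /sig; lra. Qed.

Lemma sig_im m : sig m * sin (theta m) + 0 * cos (theta m) =
  cos (theta m) * sin (theta m) + sin (theta m) * cos (theta m) + sin (theta m) + 0.
Proof. rewrite /sig; lra. Qed.

Fixpoint ap (s : R) (n : nat) : R * R :=
  match n with 0 => (0, 1) | S n => let (u, v) := ap s n in (v, s * v - u) end.
Definition a s n := fst (ap s n).

Lemma a0 s : a s 0 = 0. Proof. by []. Qed.
Lemma a1 s : a s 1 = 1. Proof. by []. Qed.
Lemma aS s n : a s (S (S n)) = s * a s (S n) - a s n.
Proof. by rewrite /a /=; case: (ap s n). Qed.

Lemma a_pos s n : 2 <= s -> 0 <= a s n /\ 1 <= a s (S n) - a s n.
Proof.
move=> hs; elim: n => [|n [IH1 IH2]].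
  rewrite a0 a1; lra.
rewrite aS; split; first lra.
nra.
Qed.

Lemma a_ne0 s N : 2 <= s -> leq 1 N -> a s N <> 0.
Proof.
move=> hs; case: N => [//|N] _.
have [h1 h2] := a_pos s N hs; lra.
Qed.

End S.

Local Open Scope ring_scope.

Definition wroot (m : nat) : Defs.C := Complex (cos (theta m)) (sin (theta m)).

Lemma wroot_pow m k : wroot m ^+ k = Complex (cos (INR k * theta m)) (sin (INR k * theta m)).
Proof.
elim: k => [|k IH].
  by rewrite expr0 Rmult_0_l cos_0 sin_0.
rewrite exprS IH S_INR Rmult_plus_distr_r Rmult_1_l Rplus_comm.
rewrite cos_plus sin_plus /wroot.
apply/eqP; rewrite eq_complex /=; apply/andP; split; apply/eqP.
- by rewrite RminusE !RmultE.
- by rewrite RplusE !RmultE addrC.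
Qed.

Lemma wroot_prim (m : nat) : leq 6 m -> m.-primitive_root (wroot m).
Proof.
move=> m6; have m0 : leq 1 m by apply: leq_trans m6.
have hm : INR m <> 0%R by apply: not_0_INR; move=> e; rewrite e in m0.
have wm : wroot m ^+ m = 1.
  rewrite wroot_pow.
  have -> : (INR m * theta m = 2 * PI)%R.
    by rewrite /theta Rmult_comm Rmult_assoc Rinv_l // Rmult_1_r.
  by rewrite cos_2PI sin_2PI.
have [k pk km] := prim_order_exists m0 wm.
have [ekm|nkm] := eqVneq k m; first by move: pk; rewrite ekm.
have k0 := prim_order_gt0 pk.
have klt : leq (S k) m by rewrite ltn_neqAle nkm dvdn_leq.
have := prim_expr_order pk; rewrite wroot_pow => /(congr1 (@complex.Re _)) /= hc.
have [t1 t2] := theta_bound k0 klt.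
exfalso; have := cos_lt1 t1 t2; rewrite hc => h; exact: (Rlt_irrefl _ h).
Qed.

Lemma sig_w m : (sig m)%:C%C * wroot m = wroot m ^+ 2 + wroot m + 1.
Proof.
rewrite expr2 /wroot; apply/eqP; rewrite eq_complex /=; apply/andP; split; apply/eqP.
- exact: sig_re.
- exact: sig_im.
Qed.

Lemma aS' s n : a s n.+2 = s * a s n.+1 - a s n.
Proof. exact: aS. Qed.

End Trig.

From mathcomp Require Import ring algC cyclotomic.
Import GRing.Theory Num.Theory.
Local Open Scope ring_scope.

Definition E := seq int.
Fixpoint padd (p q : E) : E :=
  match p, q with
  | [::], _ => q
  | _, [::] => p
  | a :: p', b :: q' => (a + b) :: padd p' q'
  end.
Definition pscale (a : int) (p : E) : E := map (fun x => a * x) p.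
Definition pmul (p q : E) : E :=
  foldr (fun a acc => padd (pscale a q) (0 :: acc)) [::] p.
Definition pnorm (d : nat) (c p : E) : E := padd (take d p) (pmul (drop d p) c).
Fixpoint pred_ (d : nat) (c p : E) : E :=
  match p with [::] => [::] | a :: p' => pnorm d c (a :: pred_ d c p') end.
Definition emul d c p q := pred_ d c (pmul p q).
Definition ieq (a b : int) : bool :=
  match a, b with
  | Posz m, Posz n => Nat.eqb m n
  | Negz m, Negz n => Nat.eqb m n
  | _, _ => false
  end.
Definition allz (p : E) := all (fun a => ieq a 0) p.
Fixpoint peq (p q : E) : bool :=
  match p with
  | [::] => allz q
  | a :: p' => match q with [::] => allz p | b :: q' => ieq a b && peq p' q' end
  end.
Lemma ieqP a b : ieq a b -> a = b.
Proof. by case: a => m; case: b => n //= /PeanoNat.Nat.eqb_spec ->. Qed.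

Section Ev.
Variable z : C.
Definition ev (p : E) : C := foldr (fun a acc => a%:~R + z * acc) 0 p.

Lemma ev_padd p q : ev (padd p q) = ev p + ev q.
Proof.
elim: p q => [|a p IH] [|b q] /=; rewrite ?add0r ?addr0 //.
by rewrite IH intrD mulrDr addrACA.
Qed.

Lemma ev_pscale a p : ev (pscale a p) = a%:~R * ev p.
Proof.
elim: p => [|b p IH] /=; first by rewrite mulr0.
by rewrite IH intrM mulrDr mulrCA.
Qed.

Lemma ev_pmul p q : ev (pmul p q) = ev p * ev q.
Proof.
elim: p => [|a p IH] /=; first by rewrite mul0r.
by rewrite ev_padd ev_pscale /= IH add0r mulrDl mulrA.
Qed.

Lemma ev_take_drop d p : ev (take d p) + z ^+ d * ev (drop d p) = ev p.
Proof.
elim: d p => [|d IH] [|a p] /=; rewrite ?take0 ?drop0 ?expr0 ?mul1r ?add0r ?mulr0 ?addr0 //.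
by rewrite -(IH p) exprS -mulrA mulrDr addrA.
Qed.

Variables (d : nat) (c : E).
Hypothesis hc : z ^+ d = ev c.

Lemma ev_pnorm p : ev (pnorm d c p) = ev p.
Proof. by rewrite /pnorm ev_padd ev_pmul -hc mulrC ev_take_drop. Qed.

Lemma ev_pred p : ev (pred_ d c p) = ev p.
Proof. by elim: p => [|a p IH] //=; rewrite ev_pnorm /= IH. Qed.

Lemma ev_emul p q : ev (emul d c p q) = ev p * ev q.
Proof. by rewrite /emul ev_pred ev_pmul. Qed.

Lemma ev_allz p : allz p -> ev p = 0.
Proof. by elim: p => [|a p IH] //= /andP[/ieqP -> /IH ->]; rewrite mulr0 addr0. Qed.

Lemma ev_peq p q : peq p q -> ev p = ev q.
Proof.
elim: p q => [|a p IH] [|b q] //.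
- by move=> /ev_allz ->.
- by move=> /ev_allz ->.
- by move=> /= /andP[/ieqP -> /IH ->].
Qed.
End Ev.

Definition M4 := (E * E * E * E)%type.
Definition mmul d c (A B : M4) : M4 :=
  let: (a1, b1, c1, d1) := A in let: (a2, b2, c2, d2) := B in
  (padd (emul d c a1 a2) (emul d c b1 c2), padd (emul d c a1 b2) (emul d c b1 d2),
   padd (emul d c c1 a2) (emul d c d1 c2), padd (emul d c c1 b2) (emul d c d1 d2)).
Definition meq (A B : M4) : bool :=
  let: (a1, b1, c1, d1) := A in let: (a2, b2, c2, d2) := B in
  [&& peq a1 a2, peq b1 b2, peq c1 c2 & peq d1 d2].

Definition mk2 (a b c d : C) : 'M[C]_2 :=
  \matrix_(i < 2, j < 2)
    if (i == 0 :> nat) then (if (j == 0 :> nat) then a else b) else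
    (if (j == 0 :> nat) then c else d).

Lemma mk2E a b c d : let M := mk2 a b c d in
  [/\ M 0 0 = a, M 0 1 = b, M 1 0 = c & M 1 1 = d].
Proof. by rewrite /mk2 !mxE. Qed.

Lemma mx2_eta (M : 'M[C]_2) : M = mk2 (M 0 0) (M 0 1) (M 1 0) (M 1 1).
Proof.
apply/matrixP => i j; rewrite mxE.
case: i => [[|[|i]] Hi] //; case: j => [[|[|j]] Hj] //=;
  by congr (M _ _); apply: val_inj.
Qed.

Lemma mk2_mul a b c d a' b' c' d' :
  mk2 a b c d *m mk2 a' b' c' d' =
  mk2 (a * a' + b * c') (a * b' + b * d') (c * a' + d * c') (c * b' + d * d').
Proof.
apply/matrixP => i j; rewrite !mxE !big_ord_recl big_ord0 addr0 /= !mxE /=.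
case: i => [[|[|i]] Hi] //; case: j => [[|[|j]] Hj] //=.
Qed.

Definition evm z (A : M4) : 'M[C]_2 :=
  let: (a, b, c, d) := A in mk2 (ev z a) (ev z b) (ev z c) (ev z d).

Lemma evm_mul z d c (hc : z ^+ d = ev z c) A B :
  evm z (mmul d c A B) = evm z A *m evm z B.
Proof.
case: A => [[[a1 b1] c1] d1]; case: B => [[[a2 b2] c2] d2].
by rewrite /= mk2_mul !ev_padd !(@ev_emul z d c hc).
Qed.

Lemma evm_eq z A B : meq A B -> evm z A = evm z B.
Proof.
case: A => [[[a1 b1] c1] d1]; case: B => [[[a2 b2] c2] d2].
by rewrite /=; move=> /and4P[/(ev_peq z)-> /(ev_peq z)-> /(ev_peq z)-> /(ev_peq z)->].
Qed.

Definition closed_chk d c (gens L : seq M4) :=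
  all (fun M => all (fun g => has (meq (mmul d c g M)) L) gens) L.

Definition I4 : M4 := ([:: 1], [::], [::], [:: 1]).

Lemma mk2_1 : mk2 1 0 0 1 = 1%:M.
Proof.
apply/matrixP => i j; rewrite !mxE.
by case: i => [[|[|i]] Hi] //; case: j => [[|[|j]] Hj].
Qed.

Lemma evm_I4 z : evm z I4 = 1%:M.
Proof. by rewrite /= mulr0 !addr0 -mk2_1. Qed.

Lemma word_cat z w1 w2 : word_mx z (w1 ++ w2) = word_mx z w1 *m word_mx z w2.
Proof. by elim: w1 => [|g w IH] /=; rewrite ?mul1mx // IH mulmxA. Qed.

Lemma fin_of_chk z d c (hc : z ^+ d = ev z c) (gens L : seq M4) :
  closed_chk d c gens L -> has (meq I4) L ->
  (forall g, exists2 G, G \in gens & letter_mx z g = evm z G) ->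
  finite_mxset (Gz z).
Proof.
move=> /allP chk /hasP[M0 M0L /(evm_eq z) hM0] hg.
exists (map (evm z) L) => _ [w ->]; apply/mapP.
elim: w => [|g w IH] /=.
  by exists M0 => //; rewrite -hM0 evm_I4.
have [M ML ->] := IH.
have [G GG ->] := hg g.
have /allP /(_ G GG) /hasP [M' M'L /(evm_eq z) e] := chk M ML.
by exists M' => //; rewrite -e (@evm_mul z d c hc).
Qed.

Lemma invmx_right (A B : 'M[C]_2) : A *m B = 1%:M -> invmx A = B.
Proof.
move=> AB; have [uA _] := mulmx1_unit AB.
by rewrite -[invmx A]mulmx1 -AB mulmxA mulVmx // mul1mx.
Qed.

Definition gen (zi : E) (g : bool * bool) : M4 :=
  match g with
  | (true, false) => ([:: 0; 1], [:: 1], [::], [:: 1])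
  | (true, true) => (zi, pscale (-1) zi, [::], [:: 1])
  | (false, false) => ([::], pscale (-1) zi, [:: 1], [::])
  | (false, true) => ([::], [:: 1], [:: 0; -1], [::])
  end.

Lemma letter_gen z (zi : E) : ev z zi * z = 1 ->
  forall g, letter_mx z g = evm z (gen zi g).
Proof.
move=> hzi.
have zi_inv : z^-1 = ev z zi.
  have z0 : z != 0 by apply: contra_eq_neq hzi => ->; rewrite mulr0 eq_sym oner_neq0.
  by apply: (mulIf z0); rewrite mulVf.
have hR : Rmat z = mk2 z 1 0 1 by [].
have hS : Smat z = mk2 0 (- z^-1) 1 0 by [].
have z0 : z != 0 by apply: contra_eq_neq hzi => ->; rewrite mulr0 eq_sym oner_neq0.
case=> [[] []]; rewrite /letter_mx /= ?hR ?hS ?ev_pscale.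
all: rewrite ?mulr0 ?addr0 ?add0r ?mulr1 ?mul1r ?mulN1r -?zi_inv ?mulr1z ?mulrN1z //.
- apply: invmx_right; rewrite mk2_mul -mk2_1 mulfV //.
  by rewrite !(mulr0, mulr1, mul0r, mul1r, addr0, add0r, mulrN, subrr) mulfV // addNr.
- apply: invmx_right; rewrite mk2_mul -mk2_1.
  rewrite !(mulr0, mulr1, mul0r, mul1r, addr0, add0r, mulrN, mulNr, subrr, opprK).
  by rewrite mulrC mulfV.
Qed.

Local Notation P k := (Posz k).
Local Notation N k := (Negz k).
Definition L2 : seq M4 := [::
([::P 1],[::],[::],[::P 1]);
([::N 0],[::P 1],[::],[::P 1]);
([::],[::P 1],[::P 1],[::]);
([::],[::P 1],[::N 0],[::P 1]);
([::P 1],[::N 0],[::P 1],[::]);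
([::N 0],[::],[::N 0],[::P 1]);
([::P 1],[::],[::P 1],[::N 0]);
([::N 0],[::P 1],[::N 0],[::]);
([::],[::N 0],[::P 1],[::N 0]);
([::],[::N 0],[::N 0],[::]);
([::P 1],[::N 0],[::],[::N 0]);
([::N 0],[::],[::],[::N 0])].

Definition L3 : seq M4 := [::
([::P 1],[::],[::],[::P 1]);
([::P 0;P 1],[::P 1],[::],[::P 1]);
([::],[::P 1;P 1],[::P 1],[::]);
([::N 0;N 0],[::P 1;P 1],[::],[::P 1]);
([::],[::P 1],[::P 0;N 0],[::]);
([::],[::P 1;P 1],[::P 0;P 1],[::P 1]);
([::],[::P 1],[::P 1;P 1],[::P 0;N 0]);
([::P 1],[::N 0],[::P 1],[::]);
([::P 1;P 1],[::],[::],[::P 1;P 1]);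
([::P 1;P 1],[::P 0;N 0],[::P 1],[::]);
([::],[::P 1;P 1],[::N 0;N 0],[::P 1;P 1]);
([::],[::P 1],[::N 0],[::P 1]);
([::P 0;N 0],[::P 0;P 1],[::P 0;N 0],[::]);
([::P 1],[::N 0;N 0],[::P 0;N 0],[::]);
([::P 0;N 0],[::],[::],[::P 0;N 0]);
([::P 0;P 1],[::],[::P 0;P 1],[::P 1]);
([::N 0],[::P 1;P 1],[::],[::P 1;P 1]);
([::N 0],[::P 1],[::P 0;P 1],[::P 1]);
([::P 1;P 1],[::],[::P 1;P 1],[::P 0;N 0]);
([::P 0;P 1],[::P 0;N 0],[::P 1;P 1],[::P 0;N 0]);
([::P 1;P 1],[::P 0;N 0],[::],[::P 0;N 0]);
([::P 1;P 1],[::],[::P 1],[::N 0]);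
([::P 1],[::],[::P 0;N 0],[::P 0;P 1]);
([::],[::P 0;P 1],[::P 1;P 1],[::]);
([::P 0;N 0],[::P 0;P 1],[::],[::P 1;P 1]);
([::P 1],[::],[::P 1],[::N 0;N 0]);
([::N 0;N 0],[::P 0;P 1],[::N 0;N 0],[::P 1;P 1]);
([::P 0;N 0],[::],[::N 0;N 0],[::P 1;P 1]);
([::N 0],[::P 1;P 1],[::N 0],[::P 1]);
([::N 0;N 0],[::],[::N 0],[::P 1]);
([::N 0],[::P 1],[::],[::P 0;N 0]);
([::P 0;N 0],[::],[::P 0;N 0],[::N 0]);
([::],[::P 0;N 0],[::N 0;N 0],[::]);
([::N 0],[::P 1;P 1],[::P 0;P 1],[::]);
([::P 0;P 1],[::P 1],[::P 1;P 1],[::]);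
([::],[::P 0;P 1],[::N 0],[::P 1;P 1]);
([::P 0;P 1],[::P 1],[::P 0;P 1],[::P 0;N 0]);
([::P 1;P 1],[::P 0;N 0],[::P 1;P 1],[::N 0;N 0]);
([::],[::P 0;N 0],[::P 1],[::N 0;N 0]);
([::],[::N 0],[::P 1],[::N 0]);
([::P 1;P 1],[::N 0;N 0],[::P 1;P 1],[::]);
([::P 1],[::N 0;N 0],[::P 1],[::N 0]);
([::],[::P 0;P 1],[::P 0;N 0],[::P 0;P 1]);
([::P 0;N 0],[::N 0],[::P 0;N 0],[::P 0;P 1]);
([::P 0;P 1],[::],[::],[::P 0;P 1]);
([::P 1;P 1],[::N 0;N 0],[::P 1],[::N 0;N 0]);
([::P 0;N 0],[::P 0;P 1],[::N 0;N 0],[::P 0;P 1]);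
([::N 0;N 0],[::P 1;P 1],[::N 0],[::P 1;P 1]);
([::N 0;N 0],[::P 1;P 1],[::N 0;N 0],[::]);
([::N 0],[::P 1],[::N 0],[::]);
([::],[::P 0;N 0],[::P 0;P 1],[::P 0;N 0]);
([::P 1],[::N 0],[::P 0;N 0],[::N 0]);
([::],[::N 0;N 0],[::P 0;N 0],[::N 0]);
([::P 0;N 0],[::N 0],[::N 0;N 0],[::]);
([::N 0;N 0],[::],[::],[::N 0;N 0]);
([::],[::N 0],[::P 0;P 1],[::]);
([::N 0],[::],[::N 0],[::P 1;P 1]);
([::P 0;P 1],[::P 0;N 0],[::P 0;P 1],[::]);
([::N 0;N 0],[::P 0;P 1],[::],[::P 0;P 1]);
([::N 0],[::],[::P 0;P 1],[::P 0;N 0]);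
([::P 0;P 1],[::],[::P 1;P 1],[::N 0;N 0]);
([::],[::N 0;N 0],[::P 1;P 1],[::N 0;N 0]);
([::P 1],[::N 0;N 0],[::],[::N 0;N 0]);
([::P 1;P 1],[::N 0;N 0],[::],[::N 0]);
([::P 1],[::N 0],[::],[::P 0;P 1]);
([::],[::N 0],[::N 0;N 0],[::P 0;P 1]);
([::N 0;N 0],[::],[::N 0;N 0],[::P 0;P 1]);
([::N 0;N 0],[::P 0;P 1],[::N 0],[::]);
([::],[::N 0;N 0],[::N 0],[::]);
([::P 0;P 1],[::P 0;N 0],[::],[::N 0;N 0]);
([::P 0;N 0],[::N 0],[::],[::N 0]);
([::N 0],[::],[::],[::N 0])].

Definition L4 : seq M4 := [::
([::P 1],[::],[::],[::P 1]);
([::P 0;P 1],[::P 1],[::],[::P 1]);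
([::],[::P 0;P 1],[::P 1],[::]);
([::P 0;N 0],[::P 0;P 1],[::],[::P 1]);
([::],[::P 1],[::P 0;N 0],[::]);
([::N 0],[::P 1;P 1],[::],[::P 1]);
([::],[::P 0;P 1],[::P 0;P 1],[::P 1]);
([::],[::P 1],[::P 1],[::P 0;N 0]);
([::P 1],[::N 0],[::P 1],[::]);
([::P 0;P 1],[::],[::],[::P 0;P 1]);
([::P 0;P 1],[::P 1],[::P 1],[::]);
([::],[::P 0;P 1],[::P 0;N 0],[::P 0;P 1]);
([::],[::P 1],[::N 0],[::P 1]);
([::P 0;N 0],[::P 0;P 1],[::P 0;N 0],[::]);
([::P 1],[::P 0;N 0],[::P 0;N 0],[::]);
([::P 0;N 0],[::],[::],[::P 0;N 0]);
([::],[::P 0;P 1],[::N 0],[::P 1;P 1]);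
([::],[::P 1],[::P 0;P 1],[::P 1;N 0]);
([::P 0;P 1],[::],[::P 0;P 1],[::P 1]);
([::N 0],[::P 0;P 1],[::],[::P 0;P 1]);
([::N 0],[::P 1;P 1],[::P 0;P 1],[::P 1]);
([::P 1],[::],[::P 1],[::P 0;N 0]);
([::P 0;P 1],[::P 1;N 0],[::P 1],[::P 0;N 0]);
([::P 1],[::P 0;N 0],[::],[::P 0;N 0]);
([::P 1;P 1],[::P 0;N 0],[::P 1],[::]);
([::P 0;P 1],[::],[::P 1],[::N 0]);
([::P 1],[::],[::P 0;N 0],[::P 0;P 1]);
([::],[::N 0],[::P 0;P 1],[::]);
([::P 1],[::N 0],[::],[::P 0;P 1]);
([::P 0;N 0],[::N 0;P 1],[::P 0;N 0],[::P 0;P 1]);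
([::N 0],[::P 1;P 1],[::N 0],[::P 1]);
([::P 0;N 0],[::],[::N 0],[::P 1]);
([::N 0],[::P 1],[::],[::P 0;N 0]);
([::P 1;N 0],[::N 0],[::P 0;N 0],[::]);
([::P 0;N 0],[::],[::P 0;N 0],[::N 0]);
([::],[::P 0;N 0],[::N 0],[::]);
([::N 0],[::P 0;P 1],[::N 0],[::P 1;P 1]);
([::P 0;N 0],[::N 0;P 1],[::],[::P 0;P 1]);
([::P 0;N 0],[::P 0;P 1],[::N 0],[::P 1;P 1]);
([::P 0;P 1],[::P 1],[::P 0;P 1],[::P 1;N 0]);
([::N 0],[::P 1],[::P 0;P 1],[::P 1;N 0]);
([::P 0;P 1],[::P 1;N 0],[::],[::P 0;N 0]);
([::N 0;P 1],[::P 1],[::P 0;P 1],[::P 1]);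
([::N 0],[::P 0;P 1],[::P 0;P 1],[::]);
([::],[::N 0],[::N 0],[::P 0;P 1]);
([::P 1;P 1],[::P 0;N 0],[::P 1],[::P 0;N 0]);
([::P 1],[::P 0;N 0],[::P 1],[::N 0;N 0]);
([::],[::P 0;N 0],[::P 0;N 0],[::N 0]);
([::P 0;P 1],[::],[::P 1;P 1],[::P 0;N 0]);
([::P 1],[::],[::P 1;N 0],[::N 0]);
([::],[::N 0],[::P 1],[::N 0]);
([::P 0;P 1],[::P 0;N 0],[::P 0;P 1],[::]);
([::P 1;P 1],[::P 0;N 0],[::P 1],[::N 0]);
([::P 1;N 0],[::N 0],[::P 0;N 0],[::P 0;P 1]);
([::N 0],[::],[::],[::N 0]);
([::P 1],[::N 0],[::P 0;N 0],[::N 0;P 1]);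
([::N 0;N 0],[::P 0;P 1],[::N 0],[::P 1]);
([::N 0],[::P 1],[::N 0],[::]);
([::],[::P 0;N 0],[::P 0;P 1],[::P 0;N 0]);
([::P 0;N 0],[::],[::N 0;N 0],[::P 0;P 1]);
([::P 1;N 0],[::N 0],[::P 0;N 0],[::N 0]);
([::P 0;N 0],[::N 0],[::N 0],[::]);
([::N 0;N 0],[::P 0;P 1],[::N 0],[::P 1;P 1]);
([::P 0;N 0],[::N 0;P 1],[::N 0],[::P 0;P 1]);
([::],[::N 0],[::P 0;N 0],[::N 0;P 1]);
([::N 0;P 1],[::P 1],[::P 0;P 1],[::P 1;N 0]);
([::P 0;P 1],[::P 1;N 0],[::P 0;P 1],[::P 0;N 0]);
([::],[::P 0;N 0],[::P 1],[::N 0;N 0]);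
([::N 0],[::P 0;P 1],[::N 0;P 1],[::P 1]);
([::P 0;P 1],[::P 1],[::P 1;P 1],[::P 0;N 0]);
([::N 0],[::],[::N 0],[::P 0;P 1]);
([::N 0;P 1],[::P 1],[::P 0;P 1],[::]);
([::P 0;N 0],[::N 0],[::],[::N 0]);
([::P 1],[::P 0;N 0],[::P 1;N 0],[::N 0]);
([::P 1;P 1],[::P 0;N 0],[::P 1],[::N 0;N 0]);
([::P 1],[::N 0;N 0],[::P 0;N 0],[::N 0]);
([::P 0;P 1],[::P 0;N 0],[::P 1;P 1],[::P 0;N 0]);
([::P 1],[::N 0],[::P 1;N 0],[::N 0]);
([::P 1],[::N 0;N 0],[::P 1],[::N 0]);
([::P 0;P 1],[::P 0;N 0],[::],[::N 0]);
([::N 0],[::],[::P 0;P 1],[::P 0;N 0]);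
([::P 0;N 0],[::P 0;P 1],[::N 0;N 0],[::P 0;P 1]);
([::P 1;N 0],[::N 0],[::P 0;N 0],[::N 0;P 1]);
([::N 0],[::P 1],[::N 0;P 1],[::P 1]);
([::N 0;N 0],[::P 0;P 1],[::N 0],[::]);
([::P 0;N 0],[::N 0],[::N 0;N 0],[::P 0;P 1]);
([::P 0;N 0],[::N 0;P 1],[::N 0;N 0],[::P 0;P 1]);
([::N 0],[::P 1;P 1],[::N 0;P 1],[::P 1]);
([::P 0;N 0],[::N 0],[::P 0;N 0],[::N 0;P 1]);
([::N 0;N 0],[::P 0;P 1],[::N 0],[::P 0;P 1]);
([::P 1],[::N 0;N 0],[::],[::N 0]);
([::P 0;P 1],[::P 1;N 0],[::P 1;P 1],[::P 0;N 0]);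
([::N 0;P 1],[::P 1],[::P 0;P 1],[::P 0;N 0]);
([::P 0;P 1],[::P 0;N 0],[::P 1],[::N 0;N 0]);
([::N 0],[::],[::N 0;P 1],[::P 1]);
([::P 1],[::N 0;N 0],[::P 1;N 0],[::N 0])].

Definition L5 : seq M4 := [::
([::P 1],[::],[::],[::P 1]);
([::P 0;P 1],[::P 1],[::],[::P 1]);
([::],[::P 1;P 1;P 1;P 1],[::P 1],[::]);
([::N 0;N 0;N 0;N 0],[::P 1;P 1;P 1;P 1],[::],[::P 1]);
([::],[::P 1],[::P 0;N 0],[::]);
([::P 0;P 0;P 1],[::P 1;P 1],[::],[::P 1]);
([::],[::P 1;P 1;P 1;P 1],[::P 0;P 1],[::P 1]);
([::],[::P 1],[::P 0;P 0;N 0],[::P 0;N 0]);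
([::P 1],[::N 0],[::P 1],[::]);
([::P 1;P 1;P 1;P 1],[::],[::],[::P 1;P 1;P 1;P 1]);
([::P 1;P 1;P 1;P 1],[::P 0;P 0;P 0;N 0],[::P 1],[::]);
([::],[::P 1;P 1;P 1;P 1],[::N 0;N 0;N 0;N 0],[::P 1;P 1;P 1;P 1]);
([::P 0;P 0;P 0;P 1],[::P 1;P 1;P 1],[::],[::P 1]);
([::],[::P 1],[::N 0],[::P 1]);
([::P 0;N 0],[::P 0;P 1],[::P 0;N 0],[::]);
([::P 1],[::N 0;N 0;N 0;N 0],[::P 0;N 0],[::]);
([::P 0;N 0],[::],[::],[::P 0;N 0]);
([::],[::P 1;P 1;P 1;P 1],[::P 0;P 0;P 1],[::P 1;P 1]);
([::],[::P 1],[::P 0;P 0;P 0;N 0],[::P 0;N 0;N 0]);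
([::P 0;P 1],[::],[::P 0;P 1],[::P 1]);
([::N 0],[::P 1;P 1;P 1;P 1],[::],[::P 1;P 1;P 1;P 1]);
([::N 0],[::P 1;P 1;P 1],[::P 0;P 1],[::P 1]);
([::P 0;P 0;N 0],[::],[::P 0;P 0;N 0],[::P 0;N 0]);
([::P 0;P 1],[::P 0;N 0;N 0;N 0],[::P 0;P 0;N 0],[::P 0;N 0]);
([::P 0;P 0;N 0],[::P 0;N 0],[::],[::P 0;N 0]);
([::P 1;P 1],[::P 0;N 0],[::P 1],[::]);
([::P 1;P 1;P 1;P 1],[::],[::P 1],[::N 0]);
([::P 1],[::],[::P 0;N 0],[::P 0;P 1]);
([::],[::P 0;P 0;P 0;P 1],[::P 1;P 1;P 1;P 1],[::]);
([::P 0;P 0;P 0;N 0],[::P 0;P 0;P 0;P 1],[::],[::P 1;P 1;P 1;P 1]);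
([::P 1;P 1;P 1;P 1],[::],[::P 1;P 1;P 1;P 1],[::P 0;P 0;P 0;N 0]);
([::P 1;P 1;P 1],[::P 0;P 0;N 0],[::P 1],[::]);
([::P 1],[::],[::P 1],[::N 0;N 0;N 0;N 0]);
([::N 0;N 0;N 0;N 0],[::P 0;P 1;P 1;P 1],[::N 0;N 0;N 0;N 0],[::P 1;P 1;P 1;P 1]);
([::P 0;P 0;P 0;N 0],[::],[::N 0;N 0;N 0;N 0],[::P 1;P 1;P 1;P 1]);
([::],[::P 1;P 1;P 1;P 1],[::P 0;P 0;P 0;P 1],[::P 1;P 1;P 1]);
([::],[::P 1],[::P 1;P 1;P 1;P 1],[::P 0;N 0;N 0;N 0]);
([::N 0],[::P 1;P 1],[::N 0],[::P 1]);
([::N 0;N 0;N 0;N 0],[::],[::N 0],[::P 1]);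
([::N 0],[::P 1],[::],[::P 0;N 0]);
([::P 0;N 0;N 0],[::P 0;P 0;P 1],[::P 0;N 0],[::]);
([::P 0;N 0],[::],[::P 0;P 0;P 1],[::P 0;P 0;N 0]);
([::P 0;N 0;N 0;N 0],[::P 0;P 0;P 0;P 1],[::P 0;N 0],[::]);
([::P 0;N 0],[::],[::P 0;N 0],[::N 0]);
([::],[::P 0;N 0],[::P 0;P 0;P 1],[::]);
([::P 0;P 0;P 1],[::P 0;P 1],[::P 0;P 0;P 1],[::P 1;P 1]);
([::P 0;N 0],[::P 0;P 1;P 1;P 1],[::],[::P 1;P 1;P 1;P 1]);
([::P 0;N 0],[::P 0;P 1;P 1],[::P 0;P 0;P 1],[::P 1;P 1]);
([::P 0;P 0;P 0;N 0],[::P 0;P 0;N 0],[::P 0;P 0;P 0;N 0],[::P 0;N 0;N 0]);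
([::P 0;P 0;P 1],[::P 0;P 0;N 0;N 0],[::P 0;P 0;P 0;N 0],[::P 0;N 0;N 0]);
([::P 0;P 0;P 0;N 0],[::P 0;N 0;N 0],[::],[::P 0;N 0]);
([::P 0;P 1;P 1],[::P 1],[::P 0;P 1],[::P 1]);
([::N 0],[::P 1;P 1;P 1;P 1],[::P 0;P 1],[::]);
([::P 0;P 1],[::P 1],[::P 0;P 0;N 0],[::]);
([::],[::P 0;P 0;P 0;P 1],[::N 0],[::P 1;P 1;P 1;P 1]);
([::N 0],[::P 1;P 1;P 1;P 1],[::N 0],[::P 1;P 1;P 1]);
([::P 0;P 1;P 1;P 1],[::P 1;P 1],[::P 0;P 1],[::P 1]);
([::P 0;P 1],[::P 1],[::P 0;P 1],[::P 0;N 0;N 0;N 0]);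
([::P 0;P 0;N 0;N 0],[::P 0;N 0],[::P 0;P 0;N 0],[::P 0;N 0]);
([::P 0;P 0;N 0],[::P 0;N 0],[::P 0;P 0;P 0;P 1],[::]);
([::P 1;P 1],[::P 0;N 0;N 0],[::P 0;P 0;N 0],[::P 0;N 0]);
([::P 0;P 0;N 0],[::P 0;N 0],[::P 0;P 0;N 0],[::N 0;N 0]);
([::],[::P 0;N 0],[::P 0;P 0;P 0;P 1],[::P 0;P 0;P 1]);
([::P 1;P 1;P 1;P 1],[::],[::P 1;P 1],[::P 0;N 0]);
([::P 1],[::],[::P 0;N 0;N 0],[::P 0;P 0;P 1]);
([::],[::N 0],[::P 1],[::N 0]);
([::P 1;P 1;P 1;P 1],[::N 0;N 0;N 0;N 0],[::P 1;P 1;P 1;P 1],[::]);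
([::P 1;P 1;P 1],[::N 0;N 0;N 0;N 0],[::P 1],[::N 0]);
([::],[::P 0;P 1],[::P 0;N 0],[::P 0;P 1]);
([::P 0;N 0;N 0;N 0],[::N 0],[::P 0;N 0],[::P 0;P 1]);
([::P 0;P 0;P 0;P 1],[::],[::],[::P 0;P 0;P 0;P 1]);
([::P 0;P 0;P 0;P 1],[::P 0;P 0;P 1],[::P 1;P 1;P 1;P 1],[::]);
([::],[::P 0;P 0;P 0;P 1],[::P 0;P 0;P 0;N 0],[::P 0;P 0;P 0;P 1]);
([::P 0;P 0;N 0],[::P 0;P 0;P 1;P 1],[::],[::P 1;P 1;P 1;P 1]);
([::P 0;P 1;P 1;P 1],[::P 0;P 0;P 0;N 0],[::P 1;P 1;P 1;P 1],[::P 0;P 0;P 0;N 0]);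
([::],[::P 0;P 0;P 1],[::P 1;P 1;P 1;P 1],[::P 0;P 0;P 0;N 0]);
([::P 1;P 1;P 1;P 1],[::],[::P 1;P 1;P 1],[::P 0;P 0;N 0]);
([::P 1],[::],[::P 0;N 0;N 0;N 0],[::P 0;P 0;P 0;P 1]);
([::P 1;P 1],[::N 0;N 0;N 0;N 0],[::P 1],[::N 0;N 0;N 0;N 0]);
([::],[::P 0;P 0;P 0;N 0],[::P 1],[::N 0;N 0;N 0;N 0]);
([::P 0;N 0;N 0;N 0],[::P 0;P 0;P 1;P 1],[::N 0;N 0;N 0;N 0],[::P 1;P 1;P 1;P 1]);
([::P 0;P 0;P 0;N 0],[::P 0;P 0;P 0;P 1],[::N 0;N 0;N 0;N 0],[::P 0;P 1;P 1;P 1]);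
([::N 0;N 0;N 0;N 0],[::P 1;P 1;P 1;P 1],[::N 0],[::P 1;P 1]);
([::P 0;P 0;P 0;N 0],[::P 0;P 0;P 0;P 1],[::P 0;P 0;P 0;N 0],[::]);
([::P 0;P 0;N 0;N 0],[::P 0;P 0;P 0;P 1],[::N 0;N 0;N 0;N 0],[::P 1;P 1;P 1;P 1]);
([::N 0;N 0;N 0;N 0],[::P 1;P 1;P 1;P 1],[::N 0;N 0;N 0;N 0],[::]);
([::P 0;P 0;P 0;P 1],[::P 0;P 1;P 1],[::P 0;P 0;P 0;P 1],[::P 1;P 1;P 1]);
([::P 0;P 0;N 0],[::P 0;P 0;P 1],[::P 0;P 0;P 0;P 1],[::P 1;P 1;P 1]);
([::P 1;P 1;P 1;P 1],[::P 0;P 0;N 0;N 0],[::P 1;P 1;P 1;P 1],[::P 0;N 0;N 0;N 0]);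
([::P 0;P 0;P 0;P 1],[::P 0;P 0;P 0;N 0],[::P 1;P 1;P 1;P 1],[::P 0;N 0;N 0;N 0]);
([::P 1;P 1;P 1;P 1],[::P 0;N 0;N 0;N 0],[::],[::P 0;N 0]);
([::N 0;N 0],[::P 1;P 1;P 1],[::N 0],[::P 1]);
([::N 0],[::P 1],[::P 0;P 1],[::P 0;N 0;N 0]);
([::N 0;N 0;N 0],[::P 1;P 1;P 1;P 1],[::N 0],[::P 1]);
([::N 0],[::P 1],[::N 0],[::]);
([::],[::P 0;N 0],[::P 0;P 1],[::P 0;N 0]);
([::P 0;N 0],[::],[::P 0;P 0;P 1;P 1],[::P 0;P 0;P 0;N 0]);
([::],[::P 0;P 0;N 0],[::P 0;P 0;P 1],[::P 0;P 0;N 0]);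
([::N 0;N 0],[::P 0;P 1],[::P 0;P 0;P 1],[::P 0;P 0;N 0]);
([::P 0;P 0;P 1],[::P 0;P 0;N 0],[::P 0;P 0;P 1],[::]);
([::P 0;N 0],[::],[::N 0;N 0],[::P 1;P 1;P 1;P 1]);
([::P 0;N 0;N 0],[::N 0],[::P 0;N 0],[::N 0]);
([::],[::N 0;N 0;N 0;N 0],[::P 0;N 0],[::N 0]);
([::P 0;N 0],[::N 0],[::P 0;P 0;P 1],[::]);
([::P 0;P 0;P 1],[::],[::],[::P 0;P 0;P 1]);
([::P 0;P 0;P 1;P 1],[::P 1;P 1;P 1],[::P 0;P 0;P 1],[::P 1;P 1]);
([::P 0;N 0],[::P 0;P 1;P 1;P 1],[::P 0;P 0;P 1],[::P 0;P 1]);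
([::P 0;P 0;P 1],[::P 1;P 1],[::P 0;P 0;P 0;N 0],[::P 0;P 0;N 0]);
([::],[::P 0;P 0;P 0;P 1],[::P 0;N 0],[::P 0;P 1;P 1;P 1]);
([::P 0;N 0],[::P 0;P 1;P 1;P 1],[::P 0;N 0],[::P 0;P 1;P 1]);
([::N 0;N 0],[::P 1;P 2;P 1;P 1],[::P 0;P 0;P 1],[::P 1;P 1]);
([::P 0;P 0;P 1],[::P 1;P 1],[::P 0;P 0;P 1],[::P 0;P 0;N 0;N 0]);
([::P 1;P 1;P 1],[::P 0;N 0;N 0;N 0],[::P 0;P 0;P 0;N 0],[::P 0;N 0;N 0]);
([::P 0;P 0;P 0;N 0],[::P 0;N 0;N 0],[::N 0;N 0;N 0;N 0],[::P 0;P 0;P 0;P 1]);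
([::P 0;P 1;P 1],[::P 1;P 0;N 0],[::P 0;P 0;P 0;N 0],[::P 0;N 0;N 0]);
([::P 0;P 0;P 0;N 0],[::P 0;N 0;N 0],[::P 0;P 0;P 0;N 0],[::N 0;N 0;N 0]);
([::],[::P 0;N 0],[::N 0;N 0;N 0;N 0],[::P 0;P 0;P 1;P 1]);
([::N 0],[::P 1;P 1;P 1;P 1],[::P 0;P 1;P 1],[::P 1]);
([::P 0;P 1],[::P 1],[::P 0;P 0;N 0;N 0],[::P 0;N 0]);
([::],[::N 0],[::P 0;P 1],[::]);
([::N 0],[::],[::N 0],[::P 1;P 1;P 1;P 1]);
([::P 0;P 1;P 1;P 1],[::P 0;P 0;P 0;N 0],[::P 0;P 1],[::]);
([::],[::P 0;P 1],[::P 0;P 0;N 0],[::]);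
([::P 1;P 1],[::N 0;N 0;N 0;N 0],[::P 0;P 0;N 0],[::]);
([::N 0;N 0;N 0;N 0],[::P 0;P 0;P 0;P 1],[::],[::P 0;P 0;P 0;P 1]);
([::N 0;N 0;N 0;N 0],[::P 0;P 0;P 1;P 1],[::N 0],[::P 1;P 1;P 1;P 1]);
([::N 0;N 0],[::P 0;P 1;P 1],[::N 0],[::P 1;P 1;P 1]);
([::],[::P 0;P 0;P 1],[::N 0],[::P 1;P 1;P 1]);
([::N 0],[::P 1;P 1;P 1;P 1],[::P 0;P 1;P 1;P 1],[::P 1;P 1]);
([::P 0;P 1],[::P 1],[::P 1;P 1],[::P 0;N 0;N 0]);
([::P 0;P 1;P 1],[::P 0;P 0;N 0;N 0],[::P 0;P 1],[::P 0;N 0;N 0;N 0]);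
([::],[::P 0;P 0;P 0;N 0],[::P 0;P 1],[::P 0;N 0;N 0;N 0]);
([::P 0;P 0;N 0],[::P 0;N 0],[::N 0;N 0;N 0],[::P 0;P 0;P 1]);
([::],[::P 0;P 0;N 0],[::P 0;P 0;P 0;P 1],[::]);
([::P 0;N 0;N 0],[::N 0],[::P 0;P 0;P 0;P 1],[::]);
([::P 0;P 0;P 0;P 1],[::],[::P 0;P 0;P 0;P 1],[::P 0;P 0;P 1]);
([::P 0;P 0;N 0],[::P 0;N 0],[::P 0;N 0;N 0],[::P 0;P 0;P 1;P 1]);
([::P 0;P 0;N 0;N 0],[::N 0;N 0;N 0],[::P 0;P 0;N 0],[::N 0;N 0]);
([::],[::N 0;N 0;N 0;N 0],[::P 0;P 0;N 0],[::N 0;N 0]);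
([::P 0;P 0;N 0],[::N 0;N 0],[::P 0;P 0;P 0;P 1],[::P 0;P 0;P 1]);
([::P 0;P 0;P 0;P 1],[::P 0;P 0;P 1],[::],[::P 0;P 0;P 1]);
([::P 0;P 1],[::P 0;N 0],[::P 1;P 1],[::P 0;N 0]);
([::P 0;P 1;P 1;P 1],[::P 1],[::P 1;P 1;P 1;P 1],[::]);
([::P 0;P 1;P 1],[::P 1],[::P 1;P 1],[::P 0;N 0]);
([::P 0;P 0;N 0],[::P 0;P 0;P 1],[::P 0;N 0;N 0],[::P 0;P 0;P 1]);
([::P 0;P 0;N 0;N 0],[::P 0;N 0],[::P 0;N 0;N 0],[::P 0;P 0;P 1]);
([::P 1],[::N 0;N 0],[::P 1],[::N 0]);
([::P 1;P 1;P 1;P 1],[::N 0;N 0;N 0;N 0],[::],[::N 0]);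
([::P 1],[::N 0],[::],[::P 0;P 1]);
([::P 0;P 0;P 0;P 1],[::],[::P 1;P 1;P 1;P 1],[::N 0;N 0;N 0;N 0]);
([::P 1;P 1;P 1;P 1],[::N 0;N 0;N 0;N 0],[::P 1;P 1;P 1],[::N 0;N 0;N 0;N 0]);
([::P 1;P 1],[::N 0;N 0;N 0],[::P 1],[::N 0]);
([::P 1],[::N 0],[::P 0;N 0;N 0;N 0],[::N 0]);
([::P 0;N 0],[::P 0;P 1;P 1],[::P 0;N 0],[::P 0;P 1]);
([::P 0;N 0],[::P 0;P 1],[::],[::P 0;P 0;N 0]);
([::P 0;N 0;N 0],[::P 0;P 1;P 1;P 1],[::P 0;N 0],[::P 0;P 1]);
([::P 0;N 0],[::P 0;P 1],[::N 0;N 0],[::P 0;P 1]);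
([::P 0;P 0;P 1],[::P 0;P 0;N 0],[::],[::P 0;P 0;P 0;P 1]);
([::P 0;P 0;P 1;P 1],[::P 0;P 1],[::P 1;P 1;P 1;P 1],[::]);
([::P 0;P 0;P 0;N 0],[::N 0;N 0;N 0],[::P 0;P 0;P 0;N 0],[::P 0;P 0;P 0;P 1]);
([::P 0;P 0;P 1],[::],[::P 0;P 0;P 0;N 0],[::P 0;P 0;P 0;P 1]);
([::],[::P 0;P 0;P 0;P 1],[::P 0;P 0;N 0],[::P 0;P 0;P 1;P 1]);
([::P 0;P 0;P 1;P 1],[::P 1;P 1;P 1],[::P 1;P 1;P 1;P 1],[::P 0;P 0;P 0;N 0]);
([::P 0;P 0;P 0;P 1],[::P 0;P 0;P 1],[::P 0;P 1;P 1;P 1],[::P 0;P 0;P 0;N 0]);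
([::P 1;P 1;P 1;P 1],[::P 0;P 0;P 0;N 0],[::P 1;P 1],[::N 0;N 0;N 0;N 0]);
([::P 0;P 0;P 0;P 1],[::P 0;P 1;P 1],[::P 1;P 1;P 1;P 1],[::P 0;P 0;P 0;N 0]);
([::P 1;P 1;P 1;P 1],[::P 0;P 0;P 0;N 0],[::],[::P 0;P 0;P 0;N 0]);
([::P 0;P 1;P 1],[::P 0;P 0;N 0],[::P 1;P 1;P 1],[::P 0;P 0;N 0]);
([::P 0;P 0;P 1],[::P 0;P 1],[::P 1;P 1;P 1],[::P 0;P 0;N 0]);
([::P 0;P 0;N 0;N 0],[::P 0;P 0;P 0;P 1],[::P 0;N 0;N 0;N 0],[::P 0;P 0;P 0;P 1]);
([::P 0;P 0;P 0;N 0],[::P 0;P 0;N 0],[::P 0;N 0;N 0;N 0],[::P 0;P 0;P 0;P 1]);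
([::P 1;P 1;P 1],[::P 0;N 0;N 0;N 0],[::P 1],[::N 0;N 0;N 0;N 0]);
([::P 1],[::N 0;N 0;N 0;N 0],[::P 0;N 0;N 0],[::N 0]);
([::P 1;P 1;P 1;P 1],[::P 0;P 0;N 0;N 0],[::P 1],[::N 0;N 0;N 0;N 0]);
([::P 1],[::N 0;N 0;N 0;N 0],[::],[::N 0;N 0;N 0;N 0]);
([::P 0;P 0;P 0;N 0],[::P 0;P 0;P 0;P 1],[::P 0;N 0;N 0;N 0],[::P 0;P 0;P 1;P 1]);
([::N 0;N 0;N 0;N 0],[::P 1;P 1;P 1;P 1],[::N 0;N 0],[::P 1;P 1;P 1]);
([::],[::N 0],[::N 0;N 0;N 0;N 0],[::P 0;P 1;P 1;P 1]);
([::P 0;P 0;N 0;N 0],[::N 0;N 0],[::N 0;N 0;N 0;N 0],[::P 0;P 1;P 1;P 1]);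
([::],[::P 0;P 1],[::N 0],[::P 1;P 1]);
([::N 0;N 0;N 0],[::P 0;P 1;P 1],[::N 0],[::P 1;P 1]);
([::P 1;P 1;P 1],[::N 0;N 0;N 0;N 0],[::P 0;P 0;P 0;N 0],[::]);
([::],[::P 0;P 0;P 1],[::P 0;P 0;P 0;N 0],[::]);
([::P 0;P 0;P 0;N 0],[::P 0;P 0;P 0;P 1],[::P 0;P 0;N 0;N 0],[::P 0;P 0;P 0;P 1]);
([::N 0;N 0;N 0;N 0],[::P 1;P 1;P 1;P 1],[::N 0;N 0;N 0],[::P 1;P 1;P 1;P 1]);
([::P 0;N 0;N 0;N 0],[::N 0],[::N 0;N 0;N 0;N 0],[::]);
([::],[::P 0;P 0;P 0;N 0],[::N 0;N 0;N 0;N 0],[::]);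
([::N 0;N 0;N 0],[::P 1;P 1;P 2;P 1],[::P 0;P 0;P 0;P 1],[::P 1;P 1;P 1]);
([::P 0;P 0;N 0],[::P 0;P 0;P 1;P 1],[::P 0;P 0;P 0;P 1],[::P 0;P 1;P 1]);
([::P 0;P 0;P 0;P 1],[::P 1;P 1;P 1],[::P 1;P 1;P 1;P 1],[::P 0;P 0;N 0;N 0]);
([::P 0;P 0;N 0],[::P 0;P 0;P 1;P 1],[::P 0;P 0;N 0],[::P 0;P 0;P 1]);
([::P 0;N 0;N 0],[::P 0;P 1;P 1;P 1],[::P 0;P 0;P 0;P 1],[::P 1;P 1;P 1]);
([::P 0;P 0;P 0;P 1],[::P 1;P 1;P 1],[::P 0;P 0;P 0;P 1],[::P 0;P 0;P 0;N 0]);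
([::P 0;P 1;P 1;P 1],[::P 1;P 0;P 0;N 0],[::P 1;P 1;P 1;P 1],[::P 0;N 0;N 0;N 0]);
([::P 1;P 1;P 1;P 1],[::P 0;N 0;N 0;N 0],[::P 1],[::N 0;N 0;N 0]);
([::P 0;P 0;P 1;P 1],[::P 1;P 1],[::P 1;P 1;P 1;P 1],[::P 0;N 0;N 0;N 0]);
([::P 1;P 1;P 1;P 1],[::P 0;N 0;N 0;N 0],[::P 1;P 1;P 1;P 1],[::N 0;N 0;N 0;N 0]);
([::],[::P 0;N 0],[::P 1],[::N 0;N 0]);
([::N 0],[::P 1],[::P 0;P 1;P 1],[::P 0;N 0;N 0;N 0]);
([::],[::P 0;P 0;N 0],[::P 0;P 1],[::P 0;N 0;N 0]);
([::P 0;P 1;P 1;P 1],[::P 0;P 0;N 0;N 0],[::P 0;P 1],[::P 0;N 0;N 0]);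
([::P 0;P 1],[::P 0;N 0;N 0],[::P 0;P 1],[::P 0;N 0]);
([::N 0],[::P 1],[::P 0;P 1;P 1;P 1],[::P 1]);
([::N 0;N 0],[::P 0;P 1],[::N 0],[::]);
([::],[::N 0;N 0;N 0;N 0],[::N 0],[::]);
([::N 0],[::],[::P 0;P 1],[::P 0;N 0]);
([::P 0;P 1],[::P 0;N 0],[::],[::P 0;P 0;P 1]);
([::P 0;P 0;P 0;P 1],[::P 0;P 0;P 0;N 0],[::P 0;P 0;P 1;P 1],[::P 0;P 0;P 0;N 0]);
([::N 0;N 0;N 0],[::P 0;P 0;P 1],[::P 0;P 0;P 1;P 1],[::P 0;P 0;P 0;N 0]);
([::P 0;P 0;P 1;P 1],[::P 0;P 0;P 0;N 0],[::P 0;P 0;P 1],[::]);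
([::P 0;P 0;P 1],[::P 0;P 0;N 0;N 0],[::P 0;P 0;P 1],[::P 0;P 0;N 0]);
([::P 0;P 0;P 1;P 1],[::P 1;P 1],[::P 0;P 0;P 1],[::P 0;P 0;N 0]);
([::P 0;P 0;P 1],[::P 0;P 0;N 0],[::P 0;P 1;P 1],[::P 0;P 0;N 0]);
([::N 0;N 0;N 0],[::P 1;P 1;P 1;P 1],[::N 0;N 0],[::P 1;P 1;P 1;P 1]);
([::N 0;N 0;N 0;N 0],[::P 0;P 0;P 0;P 1],[::N 0;N 0],[::P 1;P 1;P 1;P 1]);
([::N 0;N 0],[::P 1;P 1;P 1;P 1],[::P 0;P 0;P 1],[::]);
([::P 0;N 0;N 0;N 0],[::N 0;N 0],[::P 0;N 0],[::N 0]);
([::P 0;N 0],[::N 0],[::P 0;P 0;P 1;P 1],[::P 0;P 1]);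
([::P 1],[::N 0;N 0;N 0],[::P 0;N 0],[::N 0]);
([::P 0;N 0],[::N 0],[::],[::N 0]);
([::P 0;P 0;P 1],[::],[::P 0;P 0;P 1],[::P 0;P 1]);
([::P 0;N 0],[::P 0;P 1;P 1;P 1],[::P 0;P 0;P 1;P 1],[::P 1;P 1;P 1]);
([::P 0;P 0;P 1],[::P 1;P 1],[::P 1;P 1;P 1],[::P 0;N 0;N 0;N 0]);
([::],[::N 0],[::P 0;P 0;P 1],[::P 0;P 1]);
([::P 0;N 0],[::N 0],[::P 0;N 0],[::P 0;P 1;P 1;P 1]);
([::N 0;N 0],[::P 0;P 1;P 1],[::P 0;P 0;P 1],[::P 0;P 1]);
([::],[::P 0;P 1],[::P 0;P 0;P 0;N 0],[::P 0;P 0;N 0]);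
([::P 0;P 1;P 1],[::P 0;P 0;N 0;N 0],[::P 0;P 0;P 0;N 0],[::P 0;P 0;N 0]);
([::P 1],[::N 0;N 0;N 0],[::],[::P 0;P 0;P 0;P 1]);
([::P 1],[::N 0;N 0],[::P 0;N 0],[::P 0;P 1;P 1;P 1]);
([::P 0;N 0;N 0],[::N 0;P 0;P 1],[::P 0;N 0],[::P 0;P 1;P 1]);
([::],[::P 0;P 0;P 1],[::P 0;N 0],[::P 0;P 1;P 1]);
([::P 0;N 0],[::P 0;P 1;P 1;P 1],[::N 0;N 0],[::P 1;P 2;P 1;P 1]);
([::P 0;P 0;P 1],[::P 1;P 1],[::P 0;P 1;P 1],[::P 1;P 0;N 0]);
([::P 0;P 0;P 1;P 1],[::P 0;P 1;P 0;N 0],[::P 0;P 0;P 1],[::P 0;P 0;N 0;N 0]);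
([::],[::P 0;P 0;P 0;N 0],[::P 0;P 0;P 1],[::P 0;P 0;N 0;N 0]);
([::P 0;P 0;P 0;N 0],[::P 0;N 0;N 0],[::P 0;N 0;N 0;N 0],[::N 0;N 0]);
([::],[::P 0;P 0;N 0],[::N 0;N 0;N 0;N 0],[::P 0;P 0;P 0;P 1]);
([::P 0;P 0;N 0;N 0],[::N 0;N 0;N 0],[::N 0;N 0;N 0;N 0],[::P 0;P 0;P 0;P 1]);
([::N 0;N 0;N 0;N 0],[::P 0;P 0;P 0;P 1],[::N 0;N 0;N 0;N 0],[::P 0;P 0;P 1;P 1]);
([::P 0;P 0;P 0;N 0],[::P 0;N 0;N 0],[::P 0;P 0;N 0;N 0],[::P 0;N 0;P 0;P 1]);
([::P 1;P 1;P 1],[::N 0;N 0;N 1;N 0],[::P 0;P 0;P 0;N 0],[::N 0;N 0;N 0]);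
([::],[::N 0;N 0;N 0;N 0],[::P 0;P 0;P 0;N 0],[::N 0;N 0;N 0]);
([::P 0;P 0;P 0;N 0],[::N 0;N 0;N 0],[::N 0;N 0;N 0;N 0],[::P 0;P 0;P 1;P 1]);
([::N 0;N 0;N 0;N 0],[::P 0;P 0;P 1;P 1],[::],[::P 0;P 0;P 1]);
([::P 0;P 0;P 1],[::],[::P 0;P 1;P 1],[::P 1]);
([::N 0;N 0],[::P 1;P 1;P 1;P 1],[::N 0],[::P 1;P 1;P 1;P 1]);
([::P 0;P 0;P 1;P 1],[::P 1;P 1;P 1],[::P 0;P 1;P 1],[::P 1]);
([::P 0;P 0;P 0;N 0],[::],[::P 0;P 0;N 0;N 0],[::P 0;N 0]);
([::P 1;P 1;P 1],[::P 0;N 0;N 0;N 0],[::P 0;P 0;N 0;N 0],[::P 0;N 0]);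
([::P 0;P 1],[::P 0;N 0],[::P 0;P 1],[::]);
([::N 0],[::],[::],[::N 0]);
([::P 0;P 1],[::],[::],[::P 0;P 1]);
([::N 0;N 0;N 0;N 0],[::P 0;P 0;P 0;P 1],[::N 0],[::]);
([::N 0],[::],[::P 0;P 1;P 1;P 1],[::P 0;P 0;P 0;N 0]);
([::P 0;P 1;P 1],[::P 0;P 0;N 0],[::P 0;P 1],[::]);
([::P 0;P 1],[::],[::P 1;P 1],[::N 0;N 0;N 0;N 0]);
([::P 0;P 0;N 0],[::P 0;P 0;P 1],[::P 0;P 0;N 0],[::]);
([::P 0;P 0;N 0],[::],[::],[::P 0;P 0;N 0]);
([::P 0;P 0;N 0;N 0],[::P 0;P 0;P 0;P 1],[::P 0;P 0;N 0],[::]);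
([::P 0;P 0;N 0],[::],[::P 0;N 0;N 0],[::N 0]);
([::N 0;N 0;N 0],[::P 0;P 1;P 1;P 1],[::N 0],[::P 1;P 1;P 1;P 1]);
([::N 0;N 0;N 0],[::P 1;P 1;P 2;P 1],[::N 0],[::P 1;P 1;P 1]);
([::N 0;N 0;N 0;N 0],[::P 0;P 0;P 1;P 1],[::N 0;N 0],[::P 0;P 1;P 1]);
([::N 0],[::P 1;P 1;P 1],[::P 0;P 1;P 1],[::P 0;P 0;N 0;N 0]);
([::N 0;N 0;N 0;N 0],[::P 0;P 1;P 1;P 1],[::N 0],[::P 1;P 1;P 1]);
([::N 0],[::P 1;P 1;P 1],[::],[::P 0;P 0;P 0;N 0]);
([::P 0;P 0;P 1;P 1],[::P 0;P 1],[::P 0;P 1;P 1;P 1],[::P 1;P 1]);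
([::P 0;P 0;P 0;P 1],[::P 0;P 1;P 1],[::P 0;P 1;P 1;P 1],[::P 1;P 1]);
([::P 1;P 1;P 1],[::P 0;P 0;N 0],[::P 1;P 1],[::P 0;N 0;N 0]);
([::P 1;P 1;P 1;P 1],[::P 0;P 0;N 0;N 0],[::P 1;P 1],[::P 0;N 0;N 0]);
([::P 0;P 1;P 1;P 1],[::P 1;P 0;P 0;N 0],[::P 0;P 1],[::P 0;N 0;N 0;N 0]);
([::P 0;P 1],[::P 0;N 0;N 0;N 0],[::P 0;P 0;N 0;N 0],[::N 0;N 0;N 0]);
([::N 0],[::P 1;P 1],[::P 0;P 1],[::P 0;N 0;N 0;N 0]);
([::P 0;P 1],[::P 0;N 0;N 0;N 0],[::],[::N 0;N 0;N 0;N 0]);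
([::N 0;N 0;N 0;N 0],[::],[::N 0;N 0;N 0],[::P 0;P 0;P 1]);
([::P 0;N 0;N 0;N 0],[::N 0;N 0],[::N 0;N 0;N 0],[::P 0;P 0;P 1]);
([::N 0;N 0;N 0],[::P 0;P 0;P 1],[::P 0;P 0;P 0;P 1],[::P 0;P 0;P 1]);
([::P 0;P 0;P 0;P 1],[::P 0;P 0;P 0;N 0],[::P 0;P 0;P 0;P 1],[::]);
([::N 0;N 0;N 0],[::P 1;P 1;P 1;P 1],[::P 0;P 0;P 0;P 1],[::]);
([::P 0;P 0;P 0;P 1],[::],[::P 0;P 0;P 1;P 1],[::P 0;P 1]);
([::P 0;N 0;N 0;N 0],[::P 0;P 0;P 0;P 1],[::P 0;N 0;N 0],[::P 0;P 0;P 1;P 1]);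
([::P 1],[::N 0;N 0;N 0],[::P 0;N 0;N 0],[::P 0;P 0;P 1;P 1]);
([::P 0;N 0;N 0],[::P 0;P 0;P 1;P 1],[::P 0;P 0;P 0;P 1],[::P 0;P 0;P 1]);
([::P 1;P 1],[::N 0;N 1;N 0;N 0],[::P 0;P 0;N 0],[::N 0;N 0]);
([::P 0;P 0;N 0],[::N 0;N 0],[::N 0;N 0;N 0],[::P 0;P 1;P 1;P 1]);
([::P 0;P 1],[::P 0;N 0;N 0],[::P 0;P 0;N 0],[::N 0;N 0]);
([::P 0;P 0;N 0],[::N 0;N 0],[::],[::N 0]);
([::P 0;P 0;P 0;P 1],[::P 0;P 0;P 1],[::P 0;P 0;P 0;P 1],[::P 0;P 1;P 1]);
([::P 1;P 1;P 1],[::P 0;N 0;N 0],[::P 1;P 1],[::P 0;N 0]);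
([::P 0;P 1;P 1;P 1],[::P 1],[::P 0;P 1],[::P 0;N 0]);
([::P 1;P 1],[::P 0;N 0],[::P 0;P 0;N 0],[::P 0;P 0;P 1]);
([::P 0;P 0;P 0;P 1],[::],[::P 0;P 1;P 1;P 1],[::P 1]);
([::P 0;P 1;P 1;P 1],[::P 1],[::P 0;P 1;P 1],[::P 1]);
([::P 1;P 2;P 1;P 1],[::P 0;N 0;N 0;N 0],[::P 1;P 1],[::P 0;N 0]);
([::P 1;P 1],[::P 0;N 0],[::P 0;P 0;N 0;N 0],[::P 0;N 0]);
([::P 0;N 0;N 0;N 0],[::P 0;P 0;P 1;P 1],[::P 0;N 0;N 0],[::P 0;P 0;P 1]);
([::P 0;N 0;N 0],[::P 0;P 0;P 1],[::P 0;P 0;P 0;P 1],[::P 0;P 0;P 0;N 0]);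
([::P 1;P 0;N 0],[::N 0;N 0],[::P 0;N 0;N 0],[::P 0;P 0;P 1]);
([::P 0;N 0;N 0],[::P 0;P 0;P 1],[::N 0;N 0;N 0],[::P 0;P 0;P 1]);
([::P 1;P 1;P 1;P 1],[::N 0;N 0;N 0;N 0],[::P 1],[::N 0;N 0]);
([::P 1],[::N 0],[::P 0;N 0],[::P 0;P 1;P 1]);
([::],[::N 0;N 0;N 0;N 0],[::P 1;P 1;P 1;P 1],[::N 0;N 0;N 0;N 0]);
([::P 0;P 0;P 0;N 0],[::N 0;N 0;N 0],[::],[::N 0]);
([::N 0;N 0;N 0;N 0],[::P 0;P 1;P 1;P 1],[::],[::P 0;P 1]);
([::P 0;P 0;P 1;P 1],[::P 0;P 0;P 0;N 0],[::P 1;P 1;P 1;P 1],[::N 0;N 0;N 0;N 0]);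
([::P 0;P 1;P 1],[::P 0;N 0;N 0;N 0],[::P 1;P 1;P 1],[::N 0;N 0;N 0;N 0]);
([::P 0;P 0;P 1],[::],[::P 1;P 1;P 1],[::N 0;N 0;N 0;N 0]);
([::P 1;P 1;P 1;P 1],[::N 0;N 0;N 0;N 0],[::P 1;P 1],[::N 0;N 0;N 0]);
([::P 1],[::N 0],[::P 0;N 0;N 0],[::P 0;P 1;P 1;P 1]);
([::P 0;P 0;N 0;N 0],[::N 0;N 0],[::P 0;N 0;N 0;N 0],[::N 0]);
([::P 0;P 0;P 0;N 0],[::],[::P 0;N 0;N 0;N 0],[::N 0]);
([::P 0;N 0],[::P 0;P 1],[::P 0;P 0;P 1],[::P 0;P 0;N 0;N 0]);
([::N 0],[::P 1;P 1],[::],[::P 0;P 0;N 0]);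
([::P 0;N 0],[::P 0;P 1],[::P 0;P 0;P 1;P 1],[::P 1;P 1]);
([::N 0;N 0;N 0],[::P 0;P 1;P 1],[::N 0;N 0],[::P 0;P 1]);
([::N 0;N 0;N 0;N 0],[::],[::N 0;N 0],[::P 0;P 1]);
([::P 0;P 1],[::P 0;N 0;N 0],[::],[::P 0;P 0;P 0;P 1]);
([::P 1;P 1;P 1],[::P 0;N 0;N 0],[::P 0;P 0;P 0;N 0],[::P 0;P 0;P 0;P 1]);
([::P 0;P 0;P 1],[::P 0;P 0;N 0],[::P 0;P 0;P 0;N 0],[::N 0;N 0;N 0]);
([::P 0;P 1;P 1],[::P 0;P 0;N 0],[::P 0;P 0;P 0;N 0],[::P 0;P 0;P 0;P 1]);
([::P 0;P 0;N 0],[::N 0;N 0],[::P 0;P 0;N 0],[::P 0;P 0;P 1;P 1]);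
([::P 0;P 1],[::P 0;N 0],[::P 0;P 0;N 0],[::P 0;P 0;P 1;P 1]);
([::P 0;P 0;P 0;P 1],[::P 0;P 0;P 1],[::P 0;P 0;P 1;P 1],[::P 1;P 1;P 1]);
([::P 1;P 1;P 1;P 1],[::P 0;P 0;P 0;N 0],[::P 1;P 1;P 1],[::P 0;N 0;N 0;N 0]);
([::N 0;N 0],[::P 0;P 1;P 1],[::P 0;P 1;P 1;P 1],[::P 0;P 0;P 0;N 0]);
([::P 0;P 1;P 1],[::P 0;P 0;N 0;N 0],[::P 1;P 1],[::N 0;N 0;N 0;N 0]);
([::P 1;P 1;P 1;P 1],[::P 0;P 0;P 0;N 0],[::P 1;P 1;P 1;P 1],[::P 0;P 0;N 0;N 0]);
([::P 0;P 0;P 0;N 0],[::],[::],[::P 0;P 0;P 0;N 0]);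
([::P 1;P 1;P 2;P 1],[::P 0;P 0;N 0;N 0],[::P 1;P 1;P 1],[::P 0;P 0;N 0]);
([::P 0;P 0;P 1;P 1],[::P 0;P 1],[::P 0;P 1;P 1],[::P 0;P 0;N 0]);
([::P 1;P 1;P 1],[::P 0;P 0;N 0],[::P 0;P 0;N 0;N 0],[::P 0;P 0;P 0;P 1]);
([::P 0;P 0;P 1;P 1],[::P 0;P 1],[::P 0;P 0;P 1],[::P 0;P 1]);
([::P 0;P 1;P 1;P 1],[::P 1;P 1],[::P 1;P 1;P 1],[::P 0;P 0;N 0]);
([::P 1;P 1;P 1],[::P 0;P 0;N 0],[::P 0;P 0;P 0;N 0],[::P 0;P 0;N 0]);
([::P 1;P 0;P 0;N 0],[::N 0;N 0;N 0],[::P 0;N 0;N 0;N 0],[::P 0;P 0;P 0;P 1]);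
([::P 0;N 0;N 0;N 0],[::P 0;P 0;P 0;P 1],[::N 0;N 0;N 0],[::P 1;P 1;P 1;P 1]);
([::P 1;P 1],[::P 0;N 0;N 0],[::P 0;N 0;N 0;N 0],[::P 0;P 0;P 0;P 1]);
([::P 0;N 0;N 0;N 0],[::P 0;P 0;P 0;P 1],[::N 0;N 0;N 0;N 0],[::P 0;P 0;P 0;P 1]);
([::P 1],[::N 0;N 0;N 0;N 0],[::P 0;N 0;N 0;N 0],[::N 0;N 0]);
([::P 0;P 0;N 0;N 0],[::N 0;N 0;N 0],[::P 0;N 0;N 0],[::N 0]);
([::P 1],[::N 0;N 0;N 0;N 0],[::P 1],[::N 0;N 0;N 0]);
([::N 0;N 0;N 0;N 0],[::],[::],[::N 0;N 0;N 0;N 0]);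
([::P 1],[::N 0;N 0],[::P 0;N 0;N 0;N 0],[::P 0;P 0;P 1;P 1]);
([::P 1;P 1],[::P 0;N 0],[::P 0;N 0;N 0;N 0],[::P 0;P 0;P 1;P 1]);
([::P 0;N 0],[::P 0;P 1;P 1],[::N 0;N 0],[::P 1;P 1;P 1]);
([::P 0;N 0;N 0],[::P 0;P 0;P 1],[::N 0;N 0],[::P 1;P 1;P 1]);
([::N 0;N 0;N 0;N 0],[::P 0;P 0;P 1;P 1],[::N 0;N 0;N 0;N 0],[::P 0;P 1;P 1;P 1]);
([::P 0;P 0;P 0;N 0],[::N 0;N 0;N 0],[::P 0;P 0;N 0;N 0],[::N 0;N 0]);
([::P 0;N 0;N 0;N 0],[::N 0;P 0;P 0;P 1],[::N 0;N 0;N 0;N 0],[::P 0;P 1;P 1;P 1]);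
([::N 0;N 0;N 0;N 0],[::P 0;P 1;P 1;P 1],[::N 0;N 0;N 0],[::P 0;P 1;P 1]);
([::N 0],[::P 1;P 1;P 1],[::N 0],[::P 1;P 1]);
([::N 0;N 0],[::P 1;P 2;P 1;P 1],[::N 0],[::P 1;P 1]);
([::N 0],[::P 1;P 1],[::P 0;P 1;P 1;P 1],[::P 0;P 0;N 0;N 0]);
([::P 0;P 1;P 1],[::P 1],[::P 0;P 0;P 0;N 0],[::]);
([::P 0;P 0;P 1],[::P 0;P 1],[::P 0;P 0;P 0;N 0],[::]);
([::P 1;P 1],[::N 0;N 0;N 0],[::P 0;P 0;N 0;N 0],[::P 0;P 0;P 0;P 1]);
([::P 0;P 1],[::],[::P 0;P 0;N 0;N 0],[::P 0;P 0;P 0;P 1]);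
([::P 0;N 0;N 0],[::P 0;P 1;P 1;P 1],[::N 0;N 0;N 0],[::P 1;P 1;P 1;P 1]);
([::P 0;P 0;N 0],[::],[::N 0;N 0;N 0],[::P 1;P 1;P 1;P 1]);
([::P 0;P 0;N 0;N 0],[::P 0;N 0],[::N 0;N 0;N 0;N 0],[::]);
([::P 0;P 0;P 0;N 0],[::P 0;P 0;N 0],[::N 0;N 0;N 0;N 0],[::]);
([::P 0;P 0;N 0],[::P 0;P 0;P 1;P 1],[::N 0;N 0;N 0],[::P 1;P 1;P 2;P 1]);
([::P 0;P 0;P 0;P 1],[::P 1;P 1;P 1],[::P 0;P 1;P 1;P 1],[::P 1;P 0;P 0;N 0]);
([::],[::N 0],[::P 0;P 0;P 0;P 1],[::P 0;P 1;P 1]);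
([::P 0;N 0;N 0],[::N 0;P 0;P 1],[::P 0;P 0;P 0;P 1],[::P 0;P 1;P 1]);
([::],[::P 0;P 1],[::P 1;P 1;P 1;P 1],[::P 0;P 0;N 0;N 0]);
([::P 0;P 0;P 1;P 1],[::P 0;P 1;P 0;N 0],[::P 1;P 1;P 1;P 1],[::P 0;P 0;N 0;N 0]);
([::P 0;P 0;N 0;N 0],[::N 0;N 0],[::P 0;P 0;N 0],[::P 0;P 0;P 1]);
([::],[::P 0;P 0;P 1],[::P 0;P 0;N 0],[::P 0;P 0;P 1]);
([::P 0;P 0;N 0],[::P 0;P 0;P 1;P 1],[::P 0;N 0;N 0],[::P 0;P 1;P 1;P 1]);
([::P 0;P 0;P 0;P 1],[::P 1;P 1;P 1],[::P 0;P 0;P 1;P 1],[::P 1;P 1]);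
([::N 0;N 0;N 0],[::P 0;P 1;P 1],[::P 0;P 0;P 0;P 1],[::P 0;P 0;P 0;N 0]);
([::],[::P 0;P 0;P 0;N 0],[::P 0;P 0;P 0;P 1],[::P 0;P 0;P 0;N 0]);
([::P 1;P 1;P 1;P 1],[::P 0;N 0;N 0;N 0],[::P 1;P 1],[::N 0;N 1;N 0;N 0]);
([::],[::P 0;P 0;N 0],[::P 1],[::N 0;N 0;N 0]);
([::P 1;P 1;P 1],[::N 0;N 0;N 1;N 0],[::P 1],[::N 0;N 0;N 0]);
([::P 1],[::N 0;N 0;N 0],[::P 1],[::N 0;N 0]);
([::P 1;P 1;P 1;P 1],[::P 0;N 0;N 0;N 0],[::P 1;P 1;P 1],[::P 0;N 0;N 0]);
([::P 0;P 1;P 1;P 1],[::P 0;P 0;N 0;N 0],[::P 1;P 1;P 1;P 1],[::N 0;N 0;N 0;N 0]);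
([::P 1],[::N 0;N 0],[::],[::P 0;P 0;P 1]);
([::P 0;P 0;P 1],[::P 0;P 0;N 0;N 0],[::P 0;P 1;P 1],[::P 0;N 0;N 0;N 0]);
([::P 0;P 0;P 1;P 1],[::P 0;P 0;P 0;N 0],[::P 0;P 1;P 1],[::P 0;N 0;N 0;N 0]);
([::P 0;P 1;P 1],[::P 0;N 0;N 0;N 0],[::P 0;P 1],[::P 0;N 0]);
([::P 0;P 1],[::P 0;N 0;N 0;N 0],[::P 0;P 1],[::P 0;N 0;N 0]);
([::P 0;P 1;P 1],[::P 1;P 0;N 0],[::P 0;P 1],[::P 0;N 0;N 0]);
([::P 0;P 1],[::P 0;N 0;N 0],[::P 1;P 1],[::N 0;N 0;N 0]);
([::P 0;P 0;P 1;P 1],[::P 1;P 1],[::P 0;P 1;P 1;P 1],[::P 1]);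
([::N 0;N 0;N 0],[::P 0;P 0;P 1],[::N 0],[::]);
([::N 0],[::],[::P 0;P 1;P 1],[::P 0;P 0;N 0]);
([::N 0;N 0],[::P 1;P 1;P 1],[::P 0;P 0;P 1;P 1],[::P 0;P 0;P 0;N 0]);
([::P 0;N 0;P 0;P 1],[::P 0;P 1;P 1],[::P 0;P 0;P 1;P 1],[::P 0;P 0;P 0;N 0]);
([::P 0;P 0;P 1;P 1],[::P 0;P 0;P 0;N 0],[::P 0;P 1;P 1;P 1],[::P 0;P 0;P 0;N 0]);
([::P 0;P 0;P 1],[::P 0;P 0;N 0],[::P 1;P 1;P 1],[::P 0;N 0;N 0]);
([::P 0;P 1;P 1;P 1],[::P 0;P 0;N 0;N 0],[::P 0;P 1;P 1],[::P 0;P 0;N 0]);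
([::N 0;N 1;N 0;N 0],[::P 0;P 1;P 1;P 1],[::N 0;N 0],[::P 1;P 1;P 1;P 1]);
([::N 0;N 0],[::P 1;P 1;P 1;P 1],[::P 0;P 1;P 1;P 1],[::P 1]);
([::P 0;N 0;N 0],[::P 0;P 0;P 1;P 1],[::N 0;N 0],[::P 1;P 1;P 1;P 1]);
([::P 0;N 0],[::N 0],[::N 0;N 0],[::P 0;P 1;P 1]);
([::N 0;N 0;N 0],[::P 0;P 1;P 1;P 1],[::P 0;P 0;P 1;P 1],[::P 0;P 1]);
([::P 0;N 0;N 0],[::P 0;P 0;P 1;P 1],[::P 0;N 0],[::P 0;P 1;P 1;P 1]);
([::N 0;N 0;N 0],[::P 1;P 1;P 2;P 1],[::P 0;P 0;P 1;P 1],[::P 1;P 1;P 1]);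
([::P 0;P 1;P 1;P 1],[::P 1;P 0;P 0;N 0],[::P 1;P 1;P 1],[::P 0;N 0;N 0;N 0]);
([::P 0;P 0;P 1],[::P 0;P 1],[::],[::P 0;P 1]);
([::P 0;P 0;P 1],[::P 0;P 1],[::P 0;P 1;P 1],[::P 0;P 0;N 0;N 0]);
([::P 0;P 0;P 0;N 0],[::],[::P 0;P 0;P 0;N 0],[::P 0;P 0;N 0]);
([::P 0;P 0;P 0;N 0],[::P 0;P 0;N 0],[::],[::P 0;P 0;N 0]);
([::P 0;P 0;P 0;N 0],[::P 0;P 0;N 0],[::P 0;P 0;N 0;N 0],[::N 0;N 0;N 0]);
([::P 0;N 0;N 0;N 0],[::N 0;P 0;P 0;P 1],[::P 0;N 0],[::P 0;P 1;P 1;P 1]);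
([::P 0;N 0;N 0;N 0],[::P 0;P 0;P 1;P 1],[::P 0;N 0],[::P 0;P 1;P 1]);
([::P 1],[::N 0;N 0],[::P 0;N 0;N 0],[::N 0;P 0;P 1]);
([::P 0;N 0],[::P 0;P 1;P 1],[::P 0;P 0;P 1;P 1],[::P 0;P 1;P 0;N 0]);
([::P 0;N 0],[::P 0;P 1;P 1],[::],[::P 0;P 0;P 0;N 0]);
([::N 0;N 0;N 0],[::P 0;P 1;P 1;P 1],[::N 0;N 0],[::P 1;P 2;P 1;P 1]);
([::N 0;N 0;N 0;N 0],[::P 0;P 1;P 1;P 1],[::N 0;N 0],[::P 1;P 2;P 1;P 1]);
([::P 0;P 1;P 1;P 1],[::P 1;P 1],[::P 0;P 1;P 1],[::P 1;P 0;N 0]);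
([::N 0],[::P 1;P 1],[::P 0;P 1;P 1],[::P 1;P 0;N 0]);
([::N 0;N 0],[::P 1;P 1;P 1],[::P 0;P 0;P 1],[::P 0;P 0;N 0;N 0]);
([::P 0;P 0;P 1],[::P 0;P 0;N 0;N 0],[::P 1;P 1;P 1],[::N 0;N 0;N 1;N 0]);
([::P 0;P 0;P 1],[::P 0;P 0;N 0;N 0],[::],[::N 0;N 0;N 0;N 0]);
([::P 1;P 1],[::N 0;N 1;N 0;N 0],[::P 0;N 0;N 0;N 0],[::N 0;N 0]);
([::P 0;N 0;N 0;N 0],[::N 0;N 0],[::N 0;N 0;N 0;N 0],[::P 0;P 0;P 1;P 1]);
([::N 0;N 0;N 0;N 0],[::],[::N 0;N 0;N 0;N 0],[::P 0;P 0;P 0;P 1]);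
([::N 0;N 0;N 0;N 0],[::P 0;P 0;P 0;P 1],[::N 0;N 0;N 0],[::P 0;P 1;P 1;P 1]);
([::P 1;P 1],[::P 0;N 0;N 0],[::P 0;P 0;N 0;N 0],[::P 0;N 0;P 0;P 1]);
([::P 0;P 1],[::P 0;N 0;N 0],[::P 0;P 0;N 0;N 0],[::P 0;N 0;P 0;P 1]);
([::P 0;P 0;N 0;N 0],[::P 0;N 0;P 0;P 1],[::N 0;N 0;N 0;N 0],[::P 0;P 0;P 1;P 1]);
([::P 0;P 1;P 1],[::P 0;N 0;N 0;N 0],[::P 0;P 0;P 0;N 0],[::N 0;N 0;N 0]);
([::P 0;P 0;P 0;N 0],[::N 0;N 0;N 0],[::P 0;N 0;N 0;N 0],[::N 0;P 0;P 0;P 1]);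
([::N 0;N 0],[::P 1;P 1;P 1;P 1],[::P 0;P 0;P 1;P 1],[::P 1;P 1;P 1]);
([::N 0;P 0;P 1],[::P 1;P 1],[::P 0;P 1;P 1],[::P 1]);
([::P 0;P 1;P 1],[::P 1],[::P 1;P 1;P 1],[::P 0;N 0;N 0;N 0]);
([::P 0;P 1;P 0;N 0],[::P 0;N 0;N 0],[::P 0;P 0;N 0;N 0],[::P 0;N 0]);
([::P 0;P 0;N 0;N 0],[::P 0;N 0],[::P 0;N 0;N 0;N 0],[::N 0;N 0]);
([::P 0;P 1],[::],[::P 0;P 0;N 0],[::P 0;P 0;P 1]);
([::P 1;P 1;P 1],[::N 0;N 0;N 0;N 0],[::P 1;P 1],[::N 0;N 0;N 0;N 0]);
([::P 0;P 0;N 0],[::],[::P 0;P 0;P 0;P 1],[::P 0;P 0;P 0;N 0]);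
([::P 0;N 0;N 0;N 0],[::N 0],[::P 0;N 0;N 0],[::N 0]);
([::N 0;N 0;N 0;N 0],[::P 0;P 0;P 1;P 1],[::N 0;N 0;N 0],[::P 1;P 1;P 2;P 1]);
([::N 0],[::P 1;P 1;P 1],[::P 0;P 1;P 1;P 1],[::P 1;P 0;P 0;N 0]);
([::P 0;N 0;N 0],[::N 0;P 0;P 1],[::N 0;N 0],[::P 0;P 1;P 1]);
([::P 0;P 0;P 1;P 1],[::P 0;P 1;P 0;N 0],[::P 0;P 1;P 1],[::P 0;P 0;N 0;N 0]);
([::N 0;P 0;P 0;P 1],[::P 1;P 1;P 1],[::P 0;P 1;P 1;P 1],[::P 1;P 1]);
([::N 0;N 0;N 0],[::P 0;P 1;P 1;P 1],[::P 0;P 0;P 0;P 1],[::P 0;P 1;P 1]);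
([::N 0;N 0],[::P 1;P 2;P 1;P 1],[::P 0;P 1;P 1;P 1],[::P 1;P 1]);
([::P 0;P 1;P 1;P 1],[::P 1;P 1],[::P 1;P 1;P 1;P 1],[::P 0;P 0;N 0;N 0]);
([::P 1;P 2;P 1;P 1],[::P 0;N 0;N 0;N 0],[::P 1;P 1],[::P 0;N 0;N 0]);
([::P 0;P 1;P 1],[::P 1;P 0;N 0],[::P 1;P 1],[::P 0;N 0;N 0]);
([::P 1;P 1],[::P 0;N 0;N 0],[::P 1],[::N 0;N 0;N 0]);
([::P 0;P 1],[::P 0;N 0;N 0;N 0],[::P 1;P 1],[::N 0;N 1;N 0;N 0]);
([::P 1;P 1;P 1],[::N 0;N 0;N 1;N 0],[::P 0;P 0;N 0;N 0],[::N 0;N 0;N 0]);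
([::N 0;N 0;N 1;N 0],[::P 0;P 0;P 1;P 1],[::N 0;N 0;N 0],[::P 0;P 0;P 1]);
([::N 0;N 0;N 0],[::P 0;P 0;P 1],[::N 0;N 0],[::P 0;P 1;P 1]);
([::N 0;N 0],[::P 0;P 1],[::P 0;P 0;P 1;P 1],[::P 0;P 1]);
([::P 1;P 0;N 0],[::N 0;N 0],[::P 0;N 0;N 0],[::P 0;P 0;P 1;P 1]);
([::P 0;P 0;N 0;N 0],[::P 0;N 0;P 0;P 1],[::P 0;N 0;N 0],[::P 0;P 0;P 1;P 1]);
([::P 0;P 0;N 0],[::N 0;N 0],[::P 0;N 0;N 0],[::N 0;P 0;P 1]);
([::P 0;N 0;N 0;N 0],[::N 0;P 0;P 0;P 1],[::N 0;N 0;N 0],[::P 0;P 1;P 1;P 1]);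
([::P 0;P 1;P 1;P 1],[::P 1],[::P 1;P 1;P 1],[::P 0;N 0;N 0]);
([::P 0;P 1;P 1;P 1],[::P 1],[::P 1;P 2;P 1;P 1],[::P 0;N 0;N 0;N 0]);
([::P 1;P 1],[::P 0;N 0],[::P 1;P 0;N 0],[::N 0;N 0]);
([::P 0;N 0;N 0],[::P 0;P 0;P 1],[::P 0;N 0;P 0;P 1],[::P 0;P 1;P 1]);
([::P 1;P 1;P 1],[::P 0;N 0;N 0],[::P 1],[::N 0;N 0]);
([::P 0;P 0;P 0;P 1],[::P 0;P 0;P 0;N 0],[::],[::N 0;N 0;N 0;N 0]);
([::P 0;P 0;P 0;P 1],[::P 0;P 1;P 1],[::],[::P 0;P 1]);
([::P 1;P 1;P 2;P 1],[::P 0;P 0;N 0;N 0],[::P 1;P 1;P 1],[::N 0;N 0;N 0;N 0]);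
([::P 1;P 1;P 1],[::N 0;N 0;N 0;N 0],[::P 0;P 0;N 0;N 0],[::N 0;N 0]);
([::P 0;P 1;P 1;P 1],[::P 0;P 0;P 0;N 0],[::P 1;P 1;P 1],[::N 0;N 0;N 0;N 0]);
([::P 0;P 1;P 1],[::P 0;P 0;N 0],[::P 1;P 1],[::N 0;N 0;N 0]);
([::P 0;P 0;N 0;N 0],[::P 0;P 0;P 0;P 1],[::P 0;N 0;N 0],[::P 0;P 1;P 1;P 1]);
([::P 1;P 0;P 0;N 0],[::N 0;N 0;N 0],[::P 0;N 0;N 0;N 0],[::N 0]);
([::P 0;N 0;N 0;N 0],[::N 0],[::N 0;N 0;N 0],[::P 0;P 1;P 1]);
([::P 1;P 1],[::N 0;N 0;N 0;N 0],[::P 0;N 0;N 0;N 0],[::N 0]);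
([::P 1;P 1;P 1;P 1],[::P 0;P 0;N 0;N 0],[::],[::P 0;P 0;N 0]);
([::N 0;N 0;N 0],[::P 1;P 1;P 1;P 1],[::P 0;P 0;P 1;P 1],[::P 1;P 1]);
([::N 0;N 1;N 0;N 0],[::P 0;P 1;P 1;P 1],[::N 0;N 0],[::P 0;P 1]);
([::N 0;N 0],[::P 0;P 1],[::P 0;P 1;P 1;P 1],[::P 0;P 0;N 0;N 0]);
([::P 0;N 0;N 0],[::N 0],[::N 0;N 0],[::P 0;P 1]);
([::P 0;P 0;N 0;N 0],[::P 0;N 0;P 0;P 1],[::P 0;P 0;N 0],[::P 0;P 0;P 1;P 1]);
([::P 1;P 1],[::N 0;N 0;N 0],[::P 0;P 0;N 0],[::P 0;P 0;P 1;P 1]);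
([::N 0;P 0;P 0;P 1],[::P 1;P 1;P 1],[::P 0;P 1;P 1;P 1],[::P 0;P 0;P 0;N 0]);
([::P 0;P 1;P 1;P 1],[::P 0;P 0;P 0;N 0],[::P 0;P 1;P 1],[::P 0;P 0;N 0;N 0]);
([::P 1;P 2;P 1;P 1],[::P 0;N 0;N 0;N 0],[::P 1;P 1],[::N 0;N 0;N 0;N 0]);
([::P 1;P 1],[::N 0;N 0;N 0;N 0],[::P 0;P 0;N 0;N 0],[::N 0;N 0;N 0]);
([::P 0;P 0;N 0],[::P 0;P 0;P 1],[::],[::P 0;P 0;P 0;N 0]);
([::P 0;P 0;P 1;P 1],[::P 0;P 1],[::P 1;P 1;P 2;P 1],[::P 0;P 0;N 0;N 0]);
([::P 1;P 1;P 1],[::P 0;P 0;N 0],[::P 1;P 0;P 0;N 0],[::N 0;N 0;N 0]);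
([::N 0;P 0;P 1],[::P 1;P 1],[::P 0;P 1;P 1],[::P 0;P 0;N 0]);
([::P 0;P 1;P 0;N 0],[::P 0;N 0;N 0],[::P 0;P 0;N 0;N 0],[::P 0;P 0;P 0;P 1]);
([::P 0;N 0;N 0;N 0],[::P 0;P 0;P 0;P 1],[::N 0;N 1;N 0;N 0],[::P 0;P 1;P 1;P 1]);
([::N 0;N 0;N 1;N 0],[::P 0;P 0;P 1;P 1],[::N 0;N 0;N 0],[::P 1;P 1;P 1;P 1]);
([::P 1;P 0;N 0],[::N 0;N 0],[::P 0;N 0;N 0],[::N 0]);
([::P 0;N 0;N 0],[::N 0],[::N 0;N 0;N 0],[::P 0;P 1;P 1;P 1]);
([::P 0;P 0;N 0;N 0],[::P 0;N 0;P 0;P 1],[::P 0;N 0;N 0;N 0],[::P 0;P 0;P 1;P 1]);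
([::P 1;P 0;P 0;N 0],[::N 0;N 0;N 0],[::P 0;N 0;N 0;N 0],[::P 0;P 0;P 1;P 1]);
([::N 0;N 0;N 0],[::P 1;P 1;P 2;P 1],[::N 0;N 0],[::P 1;P 1;P 1]);
([::N 0;N 1;N 0;N 0],[::P 0;P 1;P 1;P 1],[::N 0;N 0],[::P 1;P 1;P 1]);
([::P 1;P 1],[::N 0;N 1;N 0;N 0],[::P 0;P 0;N 0;N 0],[::N 0;N 0]);
([::P 0;P 1],[::P 0;N 0],[::P 0;P 0;N 0;N 0],[::N 0;N 0]);
([::P 0;N 0;N 0],[::N 0;P 0;P 1],[::N 0;N 0;N 0],[::P 0;P 1;P 1]);
([::P 0;P 0;N 0],[::P 0;P 0;P 1],[::N 0;N 0;N 0],[::P 0;P 1;P 1]);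
([::P 0;P 0;P 1;P 1],[::P 0;P 1;P 0;N 0],[::P 0;P 1;P 1;P 1],[::P 0;P 0;N 0;N 0]);
([::P 0;P 0;P 0;P 1],[::P 0;P 0;P 0;N 0],[::P 0;P 1;P 1;P 1],[::P 0;P 0;N 0;N 0]);
([::P 0;N 0;N 0;N 0],[::P 0;P 0;P 1;P 1],[::N 0;N 0;N 0],[::P 1;P 1;P 2;P 1]);
([::N 0;N 0],[::P 1;P 1;P 1],[::P 0;P 1;P 1;P 1],[::P 1;P 0;P 0;N 0]);
([::P 0;P 0;P 0;P 1],[::P 0;P 1;P 1],[::P 0;P 0;P 1;P 1],[::P 0;P 1;P 0;N 0]);
([::P 1;P 1;P 1;P 1],[::P 0;P 0;N 0;N 0],[::P 1;P 1;P 1],[::N 0;N 0;N 1;N 0]);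
([::P 0;N 0;N 0;N 0],[::N 0;P 0;P 0;P 1],[::P 0;N 0;N 0],[::P 0;P 1;P 1;P 1]);
([::N 0;N 0],[::P 1;P 2;P 1;P 1],[::P 0;P 0;P 1;P 1],[::P 1;P 1]);
([::P 0;P 1;P 1],[::P 0;N 0;N 0;N 0],[::P 1;P 1],[::N 0;N 1;N 0;N 0]);
([::P 1;P 1],[::N 0;N 1;N 0;N 0],[::P 1],[::N 0;N 0]);
([::P 1],[::N 0;N 0;N 0],[::P 0;N 0;N 0;N 0],[::N 0;P 0;P 0;P 1]);
([::P 0;P 1;P 1],[::P 1;P 0;N 0],[::P 1;P 1;P 1],[::P 0;N 0;N 0]);
([::P 0;P 1;P 1;P 1],[::P 1;P 0;P 0;N 0],[::P 0;P 1;P 1],[::P 0;N 0;N 0;N 0]);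
([::N 0;P 0;P 1],[::P 1;P 1],[::P 0;P 1;P 1],[::P 0;N 0;N 0;N 0]);
([::P 1;P 1;P 1],[::N 0;N 0;N 1;N 0],[::P 1;P 1],[::N 0;N 0;N 0]);
([::N 0;P 0;P 0;P 1],[::P 1;P 1;P 1],[::P 0;P 1;P 1;P 1],[::P 1]);
([::P 0;P 0;P 1;P 1],[::P 0;P 0;P 0;N 0],[::P 1;P 1;P 2;P 1],[::P 0;P 0;N 0;N 0]);
([::N 0;N 0],[::P 1;P 1;P 1;P 1],[::N 0;P 0;P 1],[::P 1;P 1]);
([::P 0;N 0;P 0;P 1],[::P 0;P 1;P 1],[::P 0;P 0;P 1;P 1],[::P 0;P 1]);
([::P 0;N 0;N 0],[::P 0;P 0;P 1;P 1],[::N 0;N 0;N 0],[::P 1;P 1;P 2;P 1]);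
([::P 0;N 0;P 0;P 1],[::P 0;P 1;P 1],[::P 0;P 0;P 1;P 1],[::P 1;P 1;P 1]);
([::P 0;P 0;P 1;P 1],[::P 1;P 1;P 1],[::P 0;P 1;P 1;P 1],[::P 1;P 0;P 0;N 0]);
([::P 1;P 1;P 2;P 1],[::P 0;P 0;N 0;N 0],[::P 1;P 1;P 1],[::P 0;N 0;N 0;N 0]);
([::P 1;P 1;P 1],[::P 0;N 0;N 0;N 0],[::P 1;P 1],[::N 0;N 1;N 0;N 0]);
([::P 0;P 0;N 0;N 0],[::N 0;N 0],[::P 0;N 0;N 0],[::N 0;P 0;P 1]);
([::N 0;N 0;N 0],[::P 0;P 1;P 1],[::P 0;P 0;P 1;P 1],[::P 0;P 1;P 0;N 0]);
([::N 0;N 1;N 0;N 0],[::P 0;P 1;P 1;P 1],[::N 0;N 0],[::P 1;P 2;P 1;P 1]);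
([::P 0;N 0;N 0],[::P 0;P 1;P 1;P 1],[::N 0;N 0],[::P 1;P 2;P 1;P 1]);
([::N 0;P 0;P 1],[::P 1;P 1],[::P 0;P 1;P 1],[::P 1;P 0;N 0]);
([::P 0;P 0;P 1;P 1],[::P 1;P 1],[::P 0;P 1;P 1],[::P 1;P 0;N 0]);
([::P 0;P 1;P 1;P 1],[::P 0;P 0;N 0;N 0],[::P 1;P 1;P 1],[::N 0;N 0;N 1;N 0]);
([::P 1;P 0;P 0;N 0],[::N 0;N 0;N 0],[::P 0;N 0;N 0;N 0],[::N 0;N 0]);
([::P 0;N 0;N 0;N 0],[::N 0;N 0],[::P 0;N 0;N 0],[::N 0;P 0;P 1]);
([::P 0;P 1;P 0;N 0],[::P 0;N 0;N 0],[::P 0;P 0;N 0;N 0],[::P 0;N 0;P 0;P 1]);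
([::P 1;P 1;P 1],[::P 0;N 0;N 0],[::P 0;P 0;N 0;N 0],[::P 0;N 0;P 0;P 1]);
([::P 1;P 1],[::N 0;N 0;N 0],[::P 0;N 0;N 0;N 0],[::N 0;P 0;P 0;P 1]);
([::P 0;P 1;P 1],[::P 1],[::P 0;P 1;P 0;N 0],[::P 0;N 0;N 0]);
([::P 0;P 0;N 0;N 0],[::P 0;N 0],[::N 0;N 0;N 1;N 0],[::P 0;P 0;P 1;P 1]);
([::N 0;N 1;N 0;N 0],[::P 0;P 1;P 1;P 1],[::N 0;N 0],[::P 0;P 1;P 1]);
([::N 0;N 0],[::P 0;P 1;P 1],[::P 0;P 0;P 1;P 1],[::P 0;P 1;P 0;N 0]);
([::N 0;P 0;P 1],[::P 1;P 1],[::P 0;P 1;P 1],[::P 0;P 0;N 0;N 0]);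
([::P 0;P 1;P 1],[::P 0;P 0;N 0;N 0],[::P 1;P 1;P 1],[::N 0;N 0;N 1;N 0]);
([::N 0;N 0;N 0],[::P 0;P 1;P 1;P 1],[::N 0;P 0;P 0;P 1],[::P 1;P 1;P 1]);
([::P 0;P 1;P 1;P 1],[::P 1;P 1],[::P 1;P 2;P 1;P 1],[::P 0;N 0;N 0;N 0]);
([::P 1;P 1],[::P 0;N 0;N 0],[::P 1;P 0;N 0],[::N 0;N 0]);
([::P 0;P 1;P 0;N 0],[::P 0;N 0;N 0],[::P 0;P 0;N 0;N 0],[::N 0;N 0;N 0]);
([::P 0;P 0;N 0;N 0],[::N 0;N 0;N 0],[::P 0;N 0;N 0;N 0],[::N 0;P 0;P 0;P 1]);
([::N 0;N 0;N 0],[::P 0;P 0;P 1],[::N 0;P 0;P 0;P 1],[::P 1;P 1;P 1]);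
([::P 0;N 0;N 0],[::P 0;P 0;P 1;P 1],[::P 0;N 0;P 0;P 1],[::P 0;P 1;P 1]);
([::N 0;N 0;N 1;N 0],[::P 0;P 0;P 1;P 1],[::N 0;N 0;N 0],[::P 0;P 1;P 1;P 1]);
([::P 1;P 1;P 2;P 1],[::P 0;P 0;N 0;N 0],[::P 1;P 1;P 1],[::P 0;N 0;N 0]);
([::P 0;P 1;P 1;P 1],[::P 0;P 0;N 0;N 0],[::P 1;P 2;P 1;P 1],[::P 0;N 0;N 0;N 0]);
([::P 0;P 1;P 1;P 1],[::P 0;P 0;P 0;N 0],[::P 1;P 2;P 1;P 1],[::P 0;N 0;N 0;N 0]);
([::P 1;P 1],[::N 0;N 0;N 0],[::P 1;P 0;N 0],[::N 0;N 0]);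
([::P 1;P 1],[::N 0;N 0;N 0;N 0],[::P 1;P 0;N 0],[::N 0;N 0]);
([::P 0;N 0;N 0],[::P 0;P 1;P 1;P 1],[::P 0;N 0;P 0;P 1],[::P 0;P 1;P 1]);
([::P 0;N 0;N 0],[::N 0],[::P 0;N 0;P 0;P 1],[::P 0;P 1;P 1]);
([::P 1;P 1;P 1],[::N 0;N 0;N 0;N 0],[::P 1;P 0;P 0;N 0],[::N 0;N 0;N 0]);
([::P 0;P 1;P 0;N 0],[::P 0;N 0;N 0],[::P 0;P 0;N 0;N 0],[::N 0;N 0]);
([::P 1;P 2;P 1;P 1],[::P 0;N 0;N 0;N 0],[::P 1;P 1],[::N 0;N 0;N 0]);
([::P 1;P 0;N 0],[::N 0;N 0],[::P 0;N 0;N 0],[::P 0;P 1;P 1;P 1]);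
([::P 0;N 0;N 0;N 0],[::N 0],[::N 0;N 1;N 0;N 0],[::P 0;P 1;P 1;P 1]);
([::N 0;N 0;N 1;N 0],[::P 0;P 0;P 1;P 1],[::N 0;N 0;N 0],[::P 0;P 1;P 1]);
([::P 0;N 0;P 0;P 1],[::P 0;P 1;P 1],[::P 0;P 0;P 1;P 1],[::P 1;P 1]);
([::N 0;N 0],[::P 0;P 1],[::N 0;P 0;P 1],[::P 1;P 1]);
([::N 0;P 0;P 0;P 1],[::P 1;P 1;P 1],[::P 0;P 1;P 1;P 1],[::P 0;P 0;N 0;N 0]);
([::P 0;P 0;P 1;P 1],[::P 1;P 1;P 1],[::P 1;P 1;P 2;P 1],[::P 0;P 0;N 0;N 0]);
([::P 1;P 1;P 1],[::P 0;N 0;N 0;N 0],[::P 1;P 0;P 0;N 0],[::N 0;N 0;N 0]);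
([::P 0;P 1;P 1],[::P 0;P 0;N 0],[::P 0;P 1;P 0;N 0],[::P 0;N 0;N 0]);
([::P 0;P 0;N 0;N 0],[::P 0;P 0;P 0;P 1],[::N 0;N 0;N 1;N 0],[::P 0;P 0;P 1;P 1]);
([::P 0;N 0;N 0;N 0],[::N 0;N 0],[::N 0;N 1;N 0;N 0],[::P 0;P 1;P 1;P 1]);
([::N 0;N 0;N 0],[::P 1;P 1;P 1;P 1],[::N 0;P 0;P 0;P 1],[::P 1;P 1;P 1]);
([::P 1;P 1;P 1],[::P 0;N 0;N 0],[::P 1;P 0;P 0;N 0],[::N 0;N 0;N 0]);
([::P 0;N 0;N 0;N 0],[::P 0;P 0;P 1;P 1],[::N 0;N 1;N 0;N 0],[::P 0;P 1;P 1;P 1]);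
([::N 0;N 0],[::P 1;P 1;P 1],[::N 0;P 0;P 1],[::P 1;P 1]);
([::N 0;N 0;N 1;N 0],[::P 0;P 0;P 1;P 1],[::N 0;N 0;N 0],[::P 1;P 1;P 2;P 1]);
([::N 0;P 0;P 0;P 1],[::P 1;P 1;P 1],[::P 0;P 1;P 1;P 1],[::P 1;P 0;P 0;N 0]);
([::P 1;P 2;P 1;P 1],[::P 0;N 0;N 0;N 0],[::P 1;P 1],[::N 0;N 1;N 0;N 0]);
([::P 0;P 1;P 1],[::P 0;N 0;N 0;N 0],[::P 0;P 1;P 0;N 0],[::P 0;N 0;N 0]);
([::P 0;P 0;P 1;P 1],[::P 1;P 1],[::P 1;P 1;P 2;P 1],[::P 0;P 0;N 0;N 0]);
([::N 0;N 0],[::P 0;P 1;P 1],[::N 0;P 0;P 1],[::P 1;P 1]);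
([::P 1;P 0;N 0],[::N 0;N 0],[::P 0;N 0;N 0],[::N 0;P 0;P 1]);
([::P 0;N 0;P 0;P 1],[::P 0;P 1;P 1],[::P 0;P 0;P 1;P 1],[::P 0;P 1;P 0;N 0]);
([::P 0;N 0;N 0;N 0],[::N 0;P 0;P 0;P 1],[::N 0;N 1;N 0;N 0],[::P 0;P 1;P 1;P 1]);
([::N 0;N 0],[::P 1;P 2;P 1;P 1],[::N 0;P 0;P 1],[::P 1;P 1]);
([::P 0;P 1;P 1],[::P 1;P 0;N 0],[::P 0;P 1;P 0;N 0],[::P 0;N 0;N 0]);
([::P 1;P 1;P 2;P 1],[::P 0;P 0;N 0;N 0],[::P 1;P 1;P 1],[::N 0;N 0;N 1;N 0]);
([::P 0;P 0;N 0;N 0],[::P 0;N 0;P 0;P 1],[::N 0;N 0;N 1;N 0],[::P 0;P 0;P 1;P 1]);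
([::P 1;P 0;P 0;N 0],[::N 0;N 0;N 0],[::P 0;N 0;N 0;N 0],[::N 0;P 0;P 0;P 1]);
([::P 0;P 1;P 1],[::P 0;P 0;N 0;N 0],[::P 0;P 1;P 0;N 0],[::P 0;N 0;N 0]);
([::P 0;P 0;N 0;N 0],[::N 0;N 0;N 0],[::N 0;N 0;N 1;N 0],[::P 0;P 0;P 1;P 1]);
([::N 0;N 0;N 0],[::P 1;P 1;P 2;P 1],[::N 0;P 0;P 0;P 1],[::P 1;P 1;P 1]);
([::P 0;P 1;P 1;P 1],[::P 1;P 0;P 0;N 0],[::P 1;P 2;P 1;P 1],[::P 0;N 0;N 0;N 0]);
([::P 1;P 1],[::N 0;N 1;N 0;N 0],[::P 1;P 0;N 0],[::N 0;N 0]);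
([::P 0;N 0;N 0],[::N 0;P 0;P 1],[::P 0;N 0;P 0;P 1],[::P 0;P 1;P 1]);
([::P 0;P 0;N 0;N 0],[::N 0;N 0],[::N 0;N 0;N 1;N 0],[::P 0;P 0;P 1;P 1]);
([::N 0;N 0;N 0],[::P 0;P 1;P 1],[::N 0;P 0;P 0;P 1],[::P 1;P 1;P 1]);
([::P 0;P 0;P 1;P 1],[::P 0;P 1;P 0;N 0],[::P 1;P 1;P 2;P 1],[::P 0;P 0;N 0;N 0]);
([::P 1;P 1;P 1],[::N 0;N 0;N 1;N 0],[::P 1;P 0;P 0;N 0],[::N 0;N 0;N 0])].

Definition letters : seq (bool * bool) := [:: (true,false); (true,true); (false,false); (false,true)].
Definition zinvE (n : nat) : E := rcons (nseq n.-1 0) 1.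

Lemma ev_zinvE z k : ev z (rcons (nseq k 0) 1) = z ^+ k.
Proof.
elim: k => [|k IH] /=; first by rewrite mulr0 addr0 mulr1z.
by rewrite IH mulr0z add0r exprS.
Qed.

Lemma fin_gen z n d c L : n.-primitive_root z -> z ^+ d = ev z c ->
  closed_chk d c (map (gen (zinvE n)) letters) L -> has (meq I4) L ->
  finite_mxset (Gz z).
Proof.
move=> pz hc chk hI; apply: (@fin_of_chk z d c hc _ _ chk hI) => g.
exists (gen (zinvE n) g); first by apply: map_f; case: g => [[] []].
apply: letter_gen; rewrite ev_zinvE -exprSr prednK ?(prim_expr_order pz) //.
exact: prim_order_gt0 pz.
Qed.


Lemma prim_fact {z : C} {n} (pz : n.-primitive_root z) k : (0 < k < n)%N -> z ^+ k != 1.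
Proof.
move=> /andP[k0 kn]; rewrite -(prim_order_dvd pz); apply/negP => /dvdn_leq.
by move=> /(_ k0); rewrite leqNgt kn.
Qed.

Lemma fac1 {z : C} {k} : z ^+ k != 1 -> forall P, (z ^+ k - 1) * P = 0 -> P = 0.
Proof. by move=> h P /eqP; rewrite mulf_eq0 subr_eq0 (negbTE h) => /eqP. Qed.


Lemma fin2 z : 2.-primitive_root z -> finite_mxset (Gz z).
Proof.
move=> pz; have z1 := prim_expr_order pz.
apply: (@fin_gen z 2 1 [:: -1] L2 pz); [|by vm_compute|by vm_compute].
have := prim_fact pz 1 isT => /fac1 /(_ (z + 1)).
rewrite /= expr1 mulr0 addr0 mulrN1z => h.
by apply/eqP; rewrite -addr_eq0; apply/eqP/h; rewrite -subr_sqr expr1n z1 subrr.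
Qed.

Lemma fin3 z : 3.-primitive_root z -> finite_mxset (Gz z).
Proof.
move=> pz; have z1 := prim_expr_order pz.
apply: (@fin_gen z 3 2 [:: -1; -1] L3 pz); [|by vm_compute|by vm_compute].
have H : z^+2 + z + 1 = 0.
  apply: (fac1 (prim_fact pz 1 isT)).
  have -> : (z ^+ 1 - 1) * (z^+2 + z + 1) = z^+3 - 1 by ring.
  by rewrite z1 subrr.
rewrite /= ?mulr0 ?addr0 ?mulrN1z ?mulr0z ?add0r.
have -> : z^+2 = (z^+2 + z + 1) - z - 1 by ring.
rewrite H; ring.
Qed.

Lemma fin4 z : 4.-primitive_root z -> finite_mxset (Gz z).
Proof.
move=> pz; have z1 := prim_expr_order pz.
apply: (@fin_gen z 4 2 [:: -1; 0] L4 pz); [|by vm_compute|by vm_compute].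
have H : z^+2 + 1 = 0.
  apply: (fac1 (prim_fact pz 2 isT)).
  have -> : (z ^+ 2 - 1) * (z^+2 + 1) = z^+4 - 1 by ring.
  by rewrite z1 subrr.
rewrite /= ?mulr0 ?addr0 ?mulrN1z ?mulr0z ?add0r.
have -> : z^+2 = (z^+2 + 1) - 1 by ring.
rewrite H; ring.
Qed.

Lemma fin5 z : 5.-primitive_root z -> finite_mxset (Gz z).
Proof.
move=> pz; have z1 := prim_expr_order pz.
apply: (@fin_gen z 5 4 [:: -1; -1; -1; -1] L5 pz); [|by vm_compute|by vm_compute].
have H : z^+4 + z^+3 + z^+2 + z + 1 = 0.
  apply: (fac1 (prim_fact pz 1 isT)).
  have -> : (z ^+ 1 - 1) * (z^+4 + z^+3 + z^+2 + z + 1) = z^+5 - 1 by ring.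
  by rewrite z1 subrr.
rewrite /= ?mulr0 ?addr0 ?mulrN1z ?mulr0z ?add0r.
have -> : z^+4 = (z^+4 + z^+3 + z^+2 + z + 1) - z^+3 - z^+2 - z - 1 by ring.
rewrite H; ring.
Qed.

Lemma fin_dir z : (exists n : nat, (2 <= n <= 5)%N /\ n.-primitive_root z) ->
  finite_mxset (Gz z).
Proof.
case=> n [/andP[n2 n5]]; case: n n2 n5 => [|[|[|[|[|[|n]]]]]] //= _ _.
- exact: fin2.
- exact: fin3.
- exact: fin4.
- exact: fin5.
Qed.

Lemma ratr_intr_poly (F : numFieldType) (p : {poly int}) :
  map_poly (ratr : rat -> F) (map_poly (intr : int -> rat) p) = map_poly intr p.
Proof. by rewrite -map_poly_comp; apply: eq_map_poly => x /=; rewrite ratr_int. Qed.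

Lemma prim_root_Phi (F : numFieldType) m (w : F) : m.-primitive_root w ->
  root (map_poly (intr : int -> F) 'Phi_m) w.
Proof.
move=> pw; have m0 := prim_order_gt0 pw.
have key d : (0 < d)%N -> w ^+ d = 1 ->
    has (fun e => root (map_poly (intr : int -> F) 'Phi_e) w) (divisors d).
  move=> d0 wd; have := congr1 (map_poly (intr : int -> F)) (prod_Cyclotomic d0).
  rewrite rmorph_prod rmorphB rmorph1 /= map_polyXn => /(congr1 (horner^~ w)).
  rewrite horner_prod !hornerE wd subrr => /eqP; rewrite prodf_seq_eq0.
  by move=> /hasP[e eD /= He]; apply/hasP; exists e.
have /hasP[d dD Hd] := key m m0 (prim_expr_order pw).
have dm : (d %| m)%N by rewrite dvdn_divisors.
have [<-//|ndm] := eqVneq d m.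
have d0 : (0 < d)%N by apply: dvdn_gt0 dm.
have dltm : (d < m)%N by rewrite ltn_neqAle ndm dvdn_leq.
exfalso.
have : w ^+ d = 1.
  have := congr1 (map_poly (intr : int -> F)) (prod_Cyclotomic d0).
  rewrite rmorph_prod rmorphB rmorph1 /= map_polyXn => /(congr1 (horner^~ w)).
  rewrite horner_prod !hornerE (big_rem d) -?dvdn_divisors //=.
  by rewrite (eqP Hd) mul0r => /esym /eqP; rewrite subr_eq0 => /eqP.
by move/eqP; rewrite -(prim_order_dvd pw) => /(dvdn_leq d0); rewrite leqNgt dltm.
Qed.

Lemma cyclo_transfer m (z w : C) (p : {poly int}) :
  m.-primitive_root z -> m.-primitive_root w ->
  root (map_poly intr p) z -> root (map_poly intr p) w.
Proof.
move=> pz pw rz.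
have m0 := prim_order_gt0 pz.
set Phi := map_poly (intr : int -> rat) 'Phi_m.
set pq := map_poly (intr : int -> rat) p.
have Phi0 : Phi != 0.
  rewrite /Phi -size_poly_eq0 size_map_inj_poly ?size_poly_eq0 ?monic_neq0 ?Cyclotomic_monic //.
  exact: intr_inj.
set g := gcdp pq Phi.
have g0 : g != 0 by rewrite gcdp_eq0 negb_and Phi0 orbT.
have rgz : root (map_poly (ratr : rat -> C) g) z.
  rewrite gcdp_map root_gcd !ratr_intr_poly rz /=.
  exact: prim_root_Phi _ pz.
have sg : (1 < size g)%N.
  rewrite -(size_map_poly (ratr : {rmorphism rat -> C})).
  by apply: root_size_gt1 rgz; rewrite map_poly_eq0.
have [x rx] : exists x : algC, root (map_poly ratr g) x.
  apply/closed_rootP; rewrite size_map_poly.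
  by rewrite neq_ltn sg orbT.
have rPx : root (map_poly (ratr : rat -> algC) Phi) x.
  by apply: root_dvdp rx; rewrite dvdp_map dvdp_gcdr.
have px : m.-primitive_root x.
  have [z0 pz0] := C_prim_root_exists m0.
  by rewrite -(root_cyclotomic pz0) -(Cintr_Cyclotomic pz0) -ratr_intr_poly.
have [p0 [Hp0 _] Hdiv] := minCpolyP x.
have p0E : p0 = Phi.
  apply: (@map_poly_inj _ _ (ratr : {rmorphism rat -> algC})).
  by rewrite -Hp0 (minCpoly_cyclotomic px) -(Cintr_Cyclotomic px) ratr_intr_poly.
have dv : Phi %| pq.
  apply: dvdp_trans (dvdp_gcdl pq Phi).
  by rewrite -/g -p0E -Hdiv.
have := @prim_root_Phi C m w pw; rewrite -!(ratr_intr_poly C); apply: root_dvdp.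
by rewrite dvdp_map.
Qed.

Local Open Scope complex_scope.
Local Open Scope ring_scope.

Fixpoint bp (n : nat) : {poly int} * {poly int} :=
  match n with
  | 0 => (0, 1)
  | n'.+1 => let (u, v) := bp n' in (v, ('X^2 + 'X + 1) * v - 'X^2 * u)
  end.
Definition b n := (bp n).1.
Lemma bS n : b n.+2 = ('X^2 + 'X + 1) * b n.+1 - 'X^2 * b n.
Proof. by rewrite /b /=; case: (bp n). Qed.

Definition Bx (x : C) n := (map_poly (intr : int -> C) (b n)).[x].
Lemma Bx0 x : Bx x 0 = 0. Proof. by rewrite /Bx /b /= rmorph0 horner0. Qed.
Lemma Bx1 x : Bx x 1 = 1. Proof. by rewrite /Bx /b /= rmorph1 hornerC. Qed.
Lemma BxS x n : Bx x n.+2 = (x ^+ 2 + x + 1) * Bx x n.+1 - x ^+ 2 * Bx x n.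
Proof.
rewrite /Bx bS rmorphB !rmorphM /= !rmorphD /= rmorph1 map_polyXn map_polyX.
by rewrite !hornerE.
Qed.

Lemma Bw m n : (6 <= m)%N ->
  Bx (Trig.wroot m) n * Trig.wroot m = Trig.wroot m ^+ n * (Trig.a (Trig.sig m) n)%:C.
Proof.
move=> m6; set w := Trig.wroot m; set S := Trig.sig m.
suff : Bx w n * w = w ^+ n * (Trig.a S n)%:C /\
       Bx w n.+1 * w = w ^+ n.+1 * (Trig.a S n.+1)%:C by case.
elim: n => [|n [IH0 IH1]].
  rewrite Bx0 Bx1 mul0r mul1r expr0 expr1 mul1r; split; first by rewrite Trig.a0.
  by rewrite Trig.a1 mulr1.
split=> //.
rewrite BxS Trig.aS' rmorphB rmorphM /=.
have -> : ((w ^+ 2 + w + 1) * Bx w n.+1 - w ^+ 2 * Bx w n) * w =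
          (w ^+ 2 + w + 1) * (Bx w n.+1 * w) - w ^+ 2 * (Bx w n * w) by ring.
rewrite IH0 IH1 -Trig.sig_w -/w -/S !exprS; ring.
Qed.

Lemma Bw_ne0 m N : (6 <= m)%N -> (0 < N)%N -> Bx (Trig.wroot m) N != 0.
Proof.
move=> m6 N0; have := @Bw m N m6.
have w0 : Trig.wroot m != 0.
  apply/eqP => e; have := prim_expr_order (@Trig.wroot_prim m m6).
  rewrite e expr0n; case: m m6 e => [//|m' _ _] /= /eqP.
  by rewrite mulr0n eq_sym oner_eq0.
have a0 : (Trig.a (Trig.sig m) N)%:C != 0 :> C.
  apply/negP => /eqP e; apply: (@Trig.a_ne0 (Trig.sig m) N (@Trig.sig_ge2 m m6) N0).
  by move/eqP: e; rewrite eq_complex /= => /andP[/eqP].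
move=> e; apply/eqP => B0; move: e; rewrite B0 mul0r => /esym /eqP.
by rewrite mulf_eq0 (negbTE a0) orbF expf_eq0 (negbTE w0) andbF.
Qed.

Lemma pigeon (s : seq 'M[C]_2) (f : nat -> 'M[C]_2) :
  (forall k, f k \in s) -> exists i j, (i < j)%N /\ f i = f j.
Proof.
move=> hf; set t := map f (iota 0 (size s).+1).
have : ~~ uniq t.
  apply/negP => u; have := uniq_leq_size u.
  have sub : {subset t <= s} by move=> x /mapP[k _ ->].
  by move=> /(_ s sub); rewrite size_map size_iota ltnn.
move=> /(uniqPn 0)[i [j [ij jt e]]].
have it : (i < size t)%N by apply: ltn_trans jt.
move: e; rewrite size_map size_iota in jt it.
rewrite !(nth_map 0) ?size_iota // !nth_iota // !add0n => e.
by exists i, j.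
Qed.

Definition wpow (w : seq (bool * bool)) k := flatten (nseq k w).

Lemma word_wpow z w k : word_mx z (wpow w k) = word_mx z w ^+ k.
Proof.
elim: k => [|k IH]; first by rewrite expr0 /= idmxE.
by rewrite /wpow /= word_cat -/(wpow w k) IH exprS mulmxE.
Qed.

Lemma mk2_mulr a b c d a' b' c' d' :
  mk2 a b c d * mk2 a' b' c' d' =
  mk2 (a * a' + b * c') (a * b' + b * d') (c * a' + d * c') (c * b' + d * d').
Proof. by rewrite -mk2_mul mulmxE. Qed.

Lemma Rpow z k : Rmat z ^+ k = mk2 (z ^+ k) (\sum_(l < k) z ^+ l) 0 1.
Proof.
elim: k => [|k IH]; first by rewrite expr0 big_ord0 -idmxE -mk2_1.
rewrite exprS IH [Rmat z]/(mk2 z 1 0 1) mk2_mulr.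
rewrite !(mulr0, mul0r, mulr1, mul1r, addr0, add0r) -exprS.
congr mk2; rewrite big_ord_recl expr0 addrC mulr_sumr; congr (_ + _).
by apply: eq_bigr => l _; rewrite exprS.
Qed.

Lemma word1 z g : word_mx z [:: g] = letter_mx z g.
Proof. by rewrite /word_mx /= mulmx1. Qed.

Definition Xw : seq (bool * bool) :=
  [:: (true, false); (true, false); (true, false); (false, false)].

Lemma wordX z : z != 0 -> word_mx z Xw = mk2 (z ^+ 2 + z + 1) (- z ^+ 2) 1 0.
Proof.
move=> z0; rewrite /= mulmx1 /letter_mx /=.
rewrite [Rmat z]/(mk2 z 1 0 1) [Smat z]/(mk2 0 (- z^-1) 1 0) !mk2_mul.
rewrite !(mulr0, mul0r, mulr1, mul1r, addr0, add0r).
congr mk2; first by ring.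
rewrite !mulrN; congr (- _); rewrite !mulrA mulfK // -expr2 //.
Qed.

Lemma Xpow z n : let X := mk2 (z ^+ 2 + z + 1) (- z ^+ 2) 1 0 in
  X ^+ n.+1 = mk2 (Bx z n.+2) (- z ^+ 2 * Bx z n.+1) (Bx z n.+1) (- z ^+ 2 * Bx z n).
Proof.
move=> X; elim: n => [|n IH].
  rewrite expr1 BxS Bx1 Bx0 /X; congr mk2; ring.
rewrite exprSr IH /X mk2_mulr [Bx z n.+3]BxS [Bx z n.+2]BxS; congr mk2; ring.
Qed.

Lemma inf_dir (z : C) : z != 0 -> finite_mxset (Gz z) ->
  exists n : nat, (2 <= n <= 5)%N /\ n.-primitive_root z.
Proof.
move=> z0 [s Hs].
have mem w : word_mx z w \in s by apply: Hs; exists w.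
have [i [j [ij eij]]] := @pigeon s (fun k => word_mx z (wpow [:: (true, false)] k)) (fun k => mem _).
rewrite !word_wpow !word1 !Rpow in eij.
have [e00 e01] : z ^+ i = z ^+ j /\ \sum_(l < i) z ^+ l = \sum_(l < j) z ^+ l.
  have := congr1 (fun M : 'M[C]_2 => M 0 0) eij.
  have := congr1 (fun M : 'M[C]_2 => M 0 1) eij.
  by case: (mk2E (z ^+ i) (\sum_(l < i) z ^+ l) 0 1) => -> -> _ _;
     case: (mk2E (z ^+ j) (\sum_(l < j) z ^+ l) 0 1) => -> -> _ _.
have zji : z ^+ (j - i) = 1.
  have e : z ^+ i * z ^+ (j - i) = z ^+ i * 1.
    by rewrite -exprD (subnKC (ltnW ij)) mulr1 e00.
  exact: (mulfI (expf_neq0 i z0) e).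
have ji0 : (0 < j - i)%N by rewrite subn_gt0.
have [m pm _] := prim_order_exists ji0 zji.
have m0 := prim_order_gt0 pm.
case: (leqP m 5) => [m5|m6].
  case: (leqP 2 m) => [m2|m1]; first by exists m; rewrite m2 m5.
  have m1' : m = 1%N by apply/eqP; rewrite eqn_leq -ltnS m1 m0.
  exfalso; move: pm; rewrite m1' => pm.
  have z1 : z = 1 by have := prim_expr_order pm; rewrite expr1.
  have hs k : \sum_(l < k) (1 : C) ^+ l = k%:R.
    rewrite (eq_bigr (fun _ => 1)); last by move=> l _; rewrite expr1n.
    by rewrite sumr_const card_ord.
  move: e01; rewrite z1 !hs => /eqP; rewrite eqr_nat => /eqP eij'.
  by move: ij; rewrite eij' ltnn.
exfalso.
have [i' [j' [ij' eij']]] := @pigeon s (fun k => word_mx z (wpow Xw k)) (fun k => mem _).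
rewrite !word_wpow (wordX z z0) in eij'.
set X := mk2 (z ^+ 2 + z + 1) (- z ^+ 2) 1 0 in eij'.
have uX : X \is a GRing.unit.
  have XY : X *m mk2 0 1 (- z^-2) ((z ^+ 2 + z + 1) * z^-2) = 1%:M.
    have y0 : z ^+ 2 != 0 by rewrite expf_neq0.
    rewrite /X mk2_mul -mk2_1; congr mk2.
    - by rewrite mulr0 add0r mulrNN mulfV.
    - by rewrite mulr1 mulNr mulrCA mulfV // mulr1 subrr.
    - by rewrite mul1r mul0r addr0.
    - by rewrite mul1r mul0r addr0.
  by have [] := mulmx1_unit XY.
have XN : X ^+ (j' - i') = 1.
  have e : X ^+ i' * X ^+ (j' - i') = X ^+ i' * 1.
    by rewrite -exprD (subnKC (ltnW ij')) mulr1 eij'.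
  have uXi : X ^+ i' \is a GRing.unit by apply: unitrX.
  exact: (mulrI uXi e).
have ji0' : (0 < j' - i')%N by rewrite subn_gt0.
have [n En] : exists n, (j' - i')%N = n.+1 by exists (j' - i').-1; rewrite prednK.
move: XN; rewrite En.
rewrite Xpow -idmxE -mk2_1 => /(congr1 (fun M : 'M[C]_2 => M 1 0)).
case: (mk2E 1 0 0 1) => _ _ -> _.
case: (mk2E (Bx z n.+2) (- z ^+ 2 * Bx z n.+1) (Bx z n.+1) (- z ^+ 2 * Bx z n)) => _ _ -> _.
move=> Bz.
have rz : root (map_poly (intr : int -> C) (b n.+1)) z by apply/eqP.
have := @cyclo_transfer m z (Trig.wroot m) (b n.+1) pm (@Trig.wroot_prim m m6) rz.
by rewrite /root -/(Bx _ _) (negbTE (@Bw_ne0 m n.+1 m6 isT)).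
Qed.

Theorem theorem1p1 (z : C) (hz : z != 0) :
  finite_mxset (Gz z) <->
  exists n : nat, (2 <= n <= 5)%N /\ n.-primitive_root z.
Proof. split; [exact: inf_dir | exact: fin_dir]. Qed.
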